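(* Let $0\le a<b$, $0\le c<d$, $\alpha,\beta>0$, $H=[a,b]^n\times[c,d]^m$, and $S=\{(x,y)\in H\mid\prod_{i=1}^m y_i^\alpha\ge\prod_{j=1}^n x_j^\beta\}$. Let $k=\min\{m,\lfloor\beta/\alpha\rfloor\}$. For $i=0,\dots,m-k$ and $j=0,\dots,n-1$ let $S_{ij}=S\cap\{(x,y)\in H\mid y_r=d\ (r\le i),\ y_r=c\ (r\ge i+k+1),\ y_1\ge\dots\ge y_m,\ x_s=b\ (s\le j),\ x_s=a\ (s\ge j+2)\}$, and for $j=0,\dots,n$ let $C_j=S\cap\{(x,y)\in H\mid x_s=b\ (s\le j),\ x_s=a\ (s\ge j+1),\ y_1\ge\dots\ge y_m\}$. Let $T=\bigcup_{i,j}S_{ij}\cup\bigcup_jC_j$. Then $$\mathrm{conv}(S)=\{(x,y)\mid\exists(u,v):\ v\ge_m y,\ u\ge_m x,\ (u,v)\in\mathrm{conv}(T)\}.$$ Moreover, if $m\alpha\le\beta$, then $\mathrm{conv}(S)=\{(x,y)\in H\mid\prod_{i=1}^m y_i^{1/m}\ge\prod_{j=1}^n(u^{S(x)}_j)^{\beta/(m\alpha)}\}$.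
   Context: $v\ge_m y$ means $\sum_{i=1}^j v_{[i]}\ge\sum_{i=1}^j y_{[i]}$ for $j$ less than the dimension, with equality for the full sum ($v_{[i]}$ the $i$-th largest entry). For $x\in[a,b]^n$, $S(x)=\sum_{i=1}^n(x_i-a)$; for $s\in[0,n(b-a)]$, $i^s=\max\{i\in\{0,\dots,n\}\mid i(b-a)<s\}$ (with $i^0=0$), and $u^s\in\mathbb{R}^n$ is given by $u^s_i=b$ for $i\le i^s$, $u^s_{i^s+1}=a+s-(b-a)i^s$, $u^s_i=a$ for $i>i^s+1$. *)

(* Defs.v *)
From Stdlib Require Import Reals List Permutation Sorted.
Import ListNotations.
Open Scope R_scope.

(* A point (x,y) of R^n x R^m is a pair of lists of lengths n and m;
   list index t (0-based) corresponds to coordinate t+1 of the paper. *)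
Definition pt : Type := (list R * list R)%type.

Definition sum_list (l : list R) : R := fold_right Rplus 0 l.
Definition prod_list (l : list R) : R := fold_right Rmult 1 l.

Fixpoint sumR (K : nat) (f : nat -> R) : R :=
  match K with O => 0 | S K' => sumR K' f + f K' end.

(* t^e for t >= 0 and e > 0, with the convention 0^e = 0
   (Stdlib's Rpower 0 e is exp (e * ln 0) = 1, which is wrong here). *)
Definition rpow (t e : R) : R := if Rle_dec t 0 then 0 else Rpower t e.

Definition majorizes (v y : list R) : Prop :=
  length v = length y /\
  exists vs ys : list R,
    Permutation v vs /\ Sorted Rge vs /\
    Permutation y ys /\ Sorted Rge ys /\
    (forall j : nat, (j < length v)%nat ->
        sum_list (firstn j vs) >= sum_list (firstn j ys)) /\
    sum_list v = sum_list y.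

Definition conv (n m : nat) (A : pt -> Prop) (p : pt) : Prop :=
  length (fst p) = n /\ length (snd p) = m /\
  exists (K : nat) (lam : nat -> R) (px py : nat -> list R),
    (forall k, (k < K)%nat -> 0 <= lam k /\ A (px k, py k)) /\
    sumR K lam = 1 /\
    (forall t, (t < n)%nat -> nth t (fst p) 0 = sumR K (fun k => lam k * nth t (px k) 0)) /\
    (forall t, (t < m)%nat -> nth t (snd p) 0 = sumR K (fun k => lam k * nth t (py k) 0)).

Definition inH (n m : nat) (a b c d : R) (p : pt) : Prop :=
  length (fst p) = n /\ length (snd p) = m /\
  (forall t, (t < n)%nat -> a <= nth t (fst p) 0 <= b) /\
  (forall t, (t < m)%nat -> c <= nth t (snd p) 0 <= d).

Definition inS (n m : nat) (a b c d alpha beta : R) (p : pt) : Prop :=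
  inH n m a b c d p /\
  prod_list (map (fun t => rpow t alpha) (snd p)) >=
  prod_list (map (fun t => rpow t beta) (fst p)).

Definition nonincr (m : nat) (y : list R) : Prop :=
  forall t, (t + 1 < m)%nat -> nth t y 0 >= nth (t + 1) y 0.

(* S_ij (paper indices, 1-based conditions translated to 0-based) *)
Definition inSij (n m : nat) (a b c d alpha beta : R) (k i j : nat) (p : pt) : Prop :=
  inS n m a b c d alpha beta p /\
  (forall t, (t < m)%nat -> (t < i)%nat -> nth t (snd p) 0 = d) /\
  (forall t, (t < m)%nat -> (i + k <= t)%nat -> nth t (snd p) 0 = c) /\
  nonincr m (snd p) /\
  (forall t, (t < n)%nat -> (t < j)%nat -> nth t (fst p) 0 = b) /\
  (forall t, (t < n)%nat -> (j + 1 <= t)%nat -> nth t (fst p) 0 = a).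

Definition inCj (n m : nat) (a b c d alpha beta : R) (j : nat) (p : pt) : Prop :=
  inS n m a b c d alpha beta p /\
  (forall t, (t < n)%nat -> (t < j)%nat -> nth t (fst p) 0 = b) /\
  (forall t, (t < n)%nat -> (j <= t)%nat -> nth t (fst p) 0 = a) /\
  nonincr m (snd p).

Definition kdef (m : nat) (alpha beta : R) : nat :=
  Nat.min m (Z.to_nat (Int_part (beta / alpha))).

Definition inT (n m : nat) (a b c d alpha beta : R) (p : pt) : Prop :=
  (exists i j : nat, (i <= m - kdef m alpha beta)%nat /\ (j <= n - 1)%nat /\
     inSij n m a b c d alpha beta (kdef m alpha beta) i j p) \/
  (exists j : nat, (j <= n)%nat /\ inCj n m a b c d alpha beta j p).

Definition Sfun (a : R) (x : list R) : R := sum_list (map (fun t => t - a) x).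

(* i^s = max {i in {0..n} | i (b-a) < s}, and 0 if this set is empty *)
Fixpoint istar_aux (a b s : R) (i : nat) : nat :=
  match i with
  | O => O
  | S i' => if Rlt_dec (INR i * (b - a)) s then i else istar_aux a b s i'
  end.
Definition istar (n : nat) (a b s : R) : nat := istar_aux a b s n.

Definition ustar (n : nat) (a b s : R) : list R :=
  let i := istar n a b s in
  map (fun t => if Nat.ltb t i then b
                else if Nat.eqb t i then a + s - (b - a) * INR i
                else a) (seq 0 n).

(* Main.v *)
Require Import Defs.
From Stdlib Require Import Reals List Permutation Sorted Lra Lia Classical Wf_nat Arith ZArith.
Import ListNotations.
Open Scope R_scope.

Fixpoint prodR (K : nat) (f : nat -> R) : R :=
  match K with O => 1 | S K' => prodR K' f * f K' end.

Lemma sumR_ext K f g : (forall k, (k < K)%nat -> f k = g k) -> sumR K f = sumR K g.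
Proof. induction K; simpl; intros H; auto. rewrite IHK by (intros; apply H; lia). rewrite (H K) by lia; auto. Qed.

Lemma sumR_le K f g : (forall k, (k < K)%nat -> f k <= g k) -> sumR K f <= sumR K g.
Proof. induction K; simpl; intros H; [lra|]. assert (H1 := H K ltac:(lia)). assert (sumR K f <= sumR K g) by (apply IHK; intros; apply H; lia). lra. Qed.

Lemma sumR_plus K f g : sumR K (fun k => f k + g k) = sumR K f + sumR K g.
Proof. induction K; simpl; [lra|]. rewrite IHK; lra. Qed.

Lemma sumR_scal K c f : sumR K (fun k => c * f k) = c * sumR K f.
Proof. induction K; simpl; [lra|]. rewrite IHK; lra. Qed.

Lemma sumR_nonneg K f : (forall k, (k < K)%nat -> 0 <= f k) -> 0 <= sumR K f.
Proof. intros H. replace 0 with (sumR K (fun _ => 0)). apply sumR_le; auto.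
 induction K; simpl; auto. rewrite IHK; [lra|]. intros; apply H; lia. Qed.

Lemma sumR_const0 K : sumR K (fun _ => 0) = 0.
Proof. induction K; simpl; auto. rewrite IHK; lra. Qed.

Lemma sumR_shift K f : sumR (S K) f = f 0%nat + sumR K (fun k => f (S k)).
Proof. induction K; simpl in *; [lra|]. rewrite IHK. lra. Qed.

Lemma sumR_app K1 K2 f : sumR (K1 + K2) f = sumR K1 f + sumR K2 (fun k => f (K1 + k)%nat).
Proof. induction K2; simpl. rewrite Nat.add_0_r; lra. rewrite Nat.add_succ_r. simpl. rewrite IHK2. lra. Qed.

Lemma sumR_swap K N (g : nat -> nat -> R) :
  sumR K (fun k => sumR N (fun t => g k t)) = sumR N (fun t => sumR K (fun k => g k t)).
Proof. induction K; simpl. rewrite sumR_const0; auto. rewrite IHK. rewrite <- sumR_plus. auto. Qed.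

Lemma sumR_zero_nonneg K f : (forall k, (k < K)%nat -> 0 <= f k) -> sumR K f = 0 ->
  forall k, (k < K)%nat -> f k = 0.
Proof. induction K; simpl; intros H H0 k Hk; [lia|].
 assert (0 <= sumR K f) by (apply sumR_nonneg; intros; apply H; lia).
 assert (0 <= f K) by (apply H; lia).
 destruct (Nat.eq_dec k K). subst; lra. apply IHK; [intros; apply H; lia| lra | lia]. Qed.

Lemma sumR_mono_K K K' f : (forall k, (k < K')%nat -> 0 <= f k) -> (K <= K')%nat -> sumR K f <= sumR K' f.
Proof. intros H HK. revert H. induction HK; intros H; [lra|]. simpl. assert (0 <= f m) by (apply H; lia). assert (sumR K f <= sumR m f) by (apply IHHK; intros; apply H; lia). lra. Qed.

Lemma sumR_diff_le p q f g : (p <= q)%nat -> (forall t, (p <= t < q)%nat -> f t <= g t) ->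
  sumR q f - sumR p f <= sumR q g - sumR p g.
Proof. intros H. induction H; intros Hfg; [lra|]. simpl.
 assert (f m <= g m) by (apply Hfg; lia). assert (sumR m f - sumR p f <= sumR m g - sumR p g) by (apply IHle; intros; apply Hfg; lia). lra. Qed.

Lemma prodR_ext K f g : (forall k, (k < K)%nat -> f k = g k) -> prodR K f = prodR K g.
Proof. induction K; simpl; intros H; auto. rewrite IHK by (intros; apply H; lia). rewrite (H K) by lia; auto. Qed.

Lemma prodR_mult K f g : prodR K (fun k => f k * g k) = prodR K f * prodR K g.
Proof. induction K; simpl; [lra|]. rewrite IHK; lra. Qed.

Lemma prodR_nonneg K f : (forall k, (k < K)%nat -> 0 <= f k) -> 0 <= prodR K f.
Proof. induction K; simpl; intros H; [lra|]. apply Rmult_le_pos. apply IHK; intros; apply H; lia. apply H; lia. Qed.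

Lemma prodR_pos K f : (forall k, (k < K)%nat -> 0 < f k) -> 0 < prodR K f.
Proof. induction K; simpl; intros H; [lra|]. apply Rmult_lt_0_compat. apply IHK; intros; apply H; lia. apply H; lia. Qed.

Lemma prodR_le K f g : (forall k, (k < K)%nat -> 0 <= f k <= g k) -> prodR K f <= prodR K g.
Proof. induction K; simpl; intros H; [lra|]. apply Rmult_le_compat.
 apply prodR_nonneg; intros; apply H; lia. apply H; lia. apply IHK; intros; apply H; lia. apply H; lia. Qed.

Lemma prodR_zero K f k : (k < K)%nat -> f k = 0 -> prodR K f = 0.
Proof. induction K; simpl; intros Hk H; [lia|]. destruct (Nat.eq_dec k K). subst. rewrite H; lra.
 rewrite IHK; auto; [lra|lia]. Qed.

Lemma prodR_shift K f : prodR (S K) f = f 0%nat * prodR K (fun k => f (S k)).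
Proof. induction K; simpl in *; [lra|]. rewrite IHK. lra. Qed.

Lemma prodR_block K i e q : prodR K (fun t => if andb (Nat.leb i t) (Nat.ltb t e) then q else 1) =
  q ^ (Nat.min K e - Nat.min K i).
Proof. induction K; [simpl; auto|]. cbn [prodR]. rewrite IHK.
 destruct (Nat.leb_spec i K); destruct (Nat.ltb_spec K e); cbn [andb].
 - replace (Nat.min (S K) e - Nat.min (S K) i)%nat with (S (Nat.min K e - Nat.min K i)) by lia. simpl; lra.
 - replace (Nat.min (S K) e - Nat.min (S K) i)%nat with (Nat.min K e - Nat.min K i)%nat by lia. lra.
 - replace (Nat.min (S K) e - Nat.min (S K) i)%nat with (Nat.min K e - Nat.min K i)%nat by lia. lra.
 - replace (Nat.min (S K) e - Nat.min (S K) i)%nat with (Nat.min K e - Nat.min K i)%nat by lia. lra.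
Qed.

Definition vec (N : nat) (f : nat -> R) : list R := map f (seq 0 N).

Lemma vec_length N f : length (vec N f) = N.
Proof. unfold vec; rewrite length_map, length_seq; auto. Qed.

Lemma vec_nth N f t : (t < N)%nat -> nth t (vec N f) 0 = f t.
Proof. intros H. unfold vec. rewrite nth_indep with (d' := f 0%nat) by (rewrite length_map, length_seq; auto).
 rewrite map_nth, seq_nth; auto. Qed.

Lemma list_ext (l l' : list R) : length l = length l' ->
  (forall t, (t < length l)%nat -> nth t l 0 = nth t l' 0) -> l = l'.
Proof. intros H1 H2. apply nth_ext with (d := 0) (d' := 0); auto. Qed.

Lemma vec_self l : vec (length l) (fun t => nth t l 0) = l.
Proof. apply list_ext. rewrite vec_length; auto. intros t Ht. rewrite vec_length in Ht. rewrite vec_nth; auto. Qed.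

Lemma sum_list_map g l : sum_list (map g l) = sumR (length l) (fun t => g (nth t l 0)).
Proof. induction l; [reflexivity|]. change (length (a::l)) with (S (length l)). rewrite sumR_shift.
 unfold sum_list in *. cbn [map fold_right nth]. rewrite IHl. auto. Qed.

Lemma sum_list_nth l : sum_list l = sumR (length l) (fun t => nth t l 0).
Proof. rewrite <- (map_id l) at 1. apply sum_list_map. Qed.

Lemma prod_list_map g l : prod_list (map g l) = prodR (length l) (fun t => g (nth t l 0)).
Proof. induction l; [reflexivity|]. change (length (a::l)) with (S (length l)). rewrite prodR_shift.
 unfold prod_list in *. cbn [map fold_right nth]. rewrite IHl. auto. Qed.

Lemma sum_list_firstn j l : (j <= length l)%nat -> sum_list (firstn j l) = sumR j (fun t => nth t l 0).
Proof. revert j. induction l; intros j H. simpl in H. destruct j; [reflexivity|simpl in H; lia].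
 destruct j; [reflexivity|]. rewrite sumR_shift. unfold sum_list in *. cbn [firstn fold_right nth].
 rewrite IHl by (simpl in H; lia). auto. Qed.

Lemma sum_list_perm l l' : Permutation l l' -> sum_list l = sum_list l'.
Proof. unfold sum_list; induction 1; simpl; lra. Qed.

Lemma prod_list_perm l l' : Permutation l l' -> prod_list l = prod_list l'.
Proof. unfold prod_list; induction 1; simpl; try lra; congruence. Qed.

Lemma exp_le_mono x y : x <= y -> exp x <= exp y.
Proof. intros H. destruct (Rle_lt_or_eq_dec _ _ H). left; apply exp_increasing; auto. subst; lra. Qed.

Lemma ln_le_mono x y : 0 < x -> x <= y -> ln x <= ln y.
Proof. intros H H1. destruct (Rle_lt_or_eq_dec _ _ H1). left; apply ln_increasing; auto. subst; lra. Qed.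

Lemma ln_le_sub1 t : 0 < t -> ln t <= t - 1.
Proof. intros H. pose proof (exp_ineq1_le (ln t)). rewrite exp_ln in H0; auto. lra. Qed.

Lemma ln_div x y : 0 < x -> 0 < y -> ln (x / y) = ln x - ln y.
Proof. intros. unfold Rdiv. rewrite ln_mult, ln_Rinv; auto. apply Rinv_0_lt_compat; auto. Qed.

Lemma ln_concave2 u v l : 0 < u -> 0 < v -> 0 <= l <= 1 ->
  l * ln u + (1 - l) * ln v <= ln (l * u + (1 - l) * v).
Proof. intros Hu Hv Hl. set (M := l * u + (1 - l) * v).
 assert (HM : 0 < M). { unfold M. destruct (Rle_lt_or_eq_dec 0 l) as [h|h]; [lra| |].
   - apply Rplus_lt_le_0_compat; [apply Rmult_lt_0_compat; lra| apply Rmult_le_pos; lra].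
   - subst. lra. }
 assert (H1 : ln u - ln M <= u / M - 1). { rewrite <- ln_div by auto. apply ln_le_sub1. apply Rdiv_lt_0_compat; auto. }
 assert (H2 : ln v - ln M <= v / M - 1). { rewrite <- ln_div by auto. apply ln_le_sub1. apply Rdiv_lt_0_compat; auto. }
 assert (HMe : M = l * u + (1 - l) * v) by reflexivity. clearbody M.
 assert (H3 : l * (u / M - 1) + (1 - l) * (v / M - 1) = 0).
 { replace (l * (u / M - 1) + (1 - l) * (v / M - 1)) with ((l * u + (1 - l) * v) / M - 1) by (field; lra).
   rewrite <- HMe. field. lra. }
 assert (l * (ln u - ln M) <= l * (u / M - 1)) by (apply Rmult_le_compat_l; lra).
 assert ((1-l) * (ln v - ln M) <= (1-l) * (v / M - 1)) by (apply Rmult_le_compat_l; lra).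
 lra. Qed.

Lemma rpow_nonneg t e : 0 <= rpow t e.
Proof. unfold rpow. destruct (Rle_dec t 0). lra. unfold Rpower. left; apply exp_pos. Qed.

Lemma rpow_pos t e : 0 < t -> rpow t e = Rpower t e.
Proof. intros H; unfold rpow. destruct (Rle_dec t 0); auto. lra. Qed.

Lemma rpow_pos' t e : 0 < t -> 0 < rpow t e.
Proof. intros H; rewrite rpow_pos; auto. unfold Rpower; apply exp_pos. Qed.

Lemma rpow_zero e : rpow 0 e = 0.
Proof. unfold rpow. destruct (Rle_dec 0 0); auto. lra. Qed.

Lemma rpow_mult u v e : 0 <= u -> 0 <= v -> rpow (u * v) e = rpow u e * rpow v e.
Proof. intros Hu Hv. destruct (Rle_lt_or_eq_dec 0 u Hu) as [hu|hu]; [|subst; rewrite Rmult_0_l, rpow_zero; lra].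
 destruct (Rle_lt_or_eq_dec 0 v Hv) as [hv|hv]; [|subst; rewrite Rmult_0_r, rpow_zero; lra].
 rewrite !rpow_pos; auto. rewrite Rpower_mult_distr; auto. apply Rmult_lt_0_compat; auto. Qed.

Lemma rpow_le u v e : 0 <= e -> 0 <= u <= v -> rpow u e <= rpow v e.
Proof. intros He [Hu Huv]. destruct (Rle_lt_or_eq_dec 0 u Hu) as [hu|hu]; [|subst; rewrite rpow_zero; apply rpow_nonneg].
 rewrite !rpow_pos by lra. apply Rle_Rpower_l; lra. Qed.

Lemma rpow_rpow t e1 e2 : 0 <= t -> rpow (rpow t e1) e2 = rpow t (e1 * e2).
Proof. intros Ht. destruct (Rle_lt_or_eq_dec 0 t Ht) as [h|h]; [|subst; rewrite !rpow_zero; auto].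
 rewrite (rpow_pos t e1) by auto. rewrite rpow_pos. rewrite Rpower_mult. rewrite rpow_pos; auto.
 unfold Rpower; apply exp_pos. Qed.

Lemma rpow_1 t : 0 <= t -> rpow t 1 = t.
Proof. intros Ht. destruct (Rle_lt_or_eq_dec 0 t Ht) as [h|h]; [|subst; rewrite !rpow_zero; auto].
 rewrite rpow_pos; auto. apply Rpower_1; auto. Qed.

Lemma rpow_one e : rpow 1 e = 1.
Proof. rewrite rpow_pos by lra. unfold Rpower. rewrite ln_1, Rmult_0_r, exp_0. auto. Qed.

Lemma rpow_pow_nat q e r : 0 < q -> (rpow q e) ^ r = rpow q (INR r * e).
Proof. intros H. rewrite !rpow_pos by auto. rewrite <- Rpower_pow by (unfold Rpower; apply exp_pos).
 rewrite Rpower_mult. f_equal. lra. Qed.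

Lemma rpow_div t u e : 0 <= t -> 0 < u -> rpow (t / u) e * rpow u e = rpow t e.
Proof. intros Ht Hu. rewrite <- rpow_mult. f_equal. field. lra. unfold Rdiv; apply Rmult_le_pos; auto. left; apply Rinv_0_lt_compat; auto. lra. Qed.

Lemma bernoulli z p : -1 < z -> 1 <= p -> 1 + p * z <= rpow (1 + z) p.
Proof. intros Hz Hp. destruct (Rle_dec (1 + p * z) 0). pose proof (rpow_nonneg (1+z) p); lra.
 apply Rnot_le_lt in n. rewrite rpow_pos by lra. unfold Rpower.
 pose proof (ln_concave2 (1 + p * z) 1 (/ p) ltac:(lra) ltac:(lra)).
 assert (0 < / p) by (apply Rinv_0_lt_compat; lra).
 assert (/ p <= 1). { rewrite <- Rinv_1. apply Rinv_le_contravar; lra. }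
 specialize (H ltac:(lra)). rewrite ln_1 in H.
 replace (/ p * (1 + p * z) + (1 - / p) * 1) with (1 + z) in H by (field; lra).
 assert (ln (1 + p * z) <= p * ln (1 + z)).
 { replace (ln (1 + p * z)) with (p * (/ p * ln (1 + p * z))) by (field; lra). apply Rmult_le_compat_l; lra. }
 rewrite <- (exp_ln (1 + p * z)) at 1 by lra. apply exp_le_mono. lra. Qed.

Lemma rpow_convex g t1 t2 l : 1 <= g -> 0 <= t1 -> 0 <= t2 -> 0 <= l <= 1 ->
  rpow (l * t1 + (1 - l) * t2) g <= l * rpow t1 g + (1 - l) * rpow t2 g.
Proof. intros Hg H1 H2 Hl. set (r := l * t1 + (1 - l) * t2).
 assert (Hr : 0 <= r) by (unfold r; apply Rplus_le_le_0_compat; apply Rmult_le_pos; lra).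
 destruct (Rle_lt_or_eq_dec 0 r Hr) as [hr|hr].
 2:{ rewrite <- hr, rpow_zero. pose proof (rpow_nonneg t1 g); pose proof (rpow_nonneg t2 g).
     apply Rplus_le_le_0_compat; apply Rmult_le_pos; lra. }
 assert (T : forall t, 0 <= t -> rpow r g * (1 + g * (t / r - 1)) <= rpow t g).
 { intros t Ht. destruct (Rle_lt_or_eq_dec 0 t Ht) as [ht|ht].
   2:{ subst t. rewrite rpow_zero. unfold Rdiv. rewrite Rmult_0_l. pose proof (rpow_nonneg r g).
       assert (1 + g * (0 - 1) <= 0) by lra. assert (rpow r g * (1 + g * (0 - 1)) <= rpow r g * 0) by (apply Rmult_le_compat_l; lra). lra. }
   rewrite <- (rpow_div t r g Ht hr). rewrite Rmult_comm. apply Rmult_le_compat_r. apply rpow_nonneg.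
   replace (t / r) with (1 + (t / r - 1)) at 2 by ring. apply bernoulli; auto.
   assert (0 < t / r) by (apply Rdiv_lt_0_compat; auto). lra. }
 pose proof (T t1 H1). pose proof (T t2 H2).
 assert (l * (rpow r g * (1 + g * (t1 / r - 1))) + (1 - l) * (rpow r g * (1 + g * (t2 / r - 1))) = rpow r g).
 { assert (Hre : r = l * t1 + (1 - l) * t2) by reflexivity. clearbody r.
   replace (l * (rpow r g * (1 + g * (t1 / r - 1))) + (1 - l) * (rpow r g * (1 + g * (t2 / r - 1))))
     with (rpow r g * (1 + g * ((l * t1 + (1 - l) * t2) / r - 1))) by (field; lra).
   rewrite <- Hre. field. lra. }
 assert (l * (rpow r g * (1 + g * (t1 / r - 1))) <= l * rpow t1 g) by (apply Rmult_le_compat_l; lra).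
 assert ((1-l) * (rpow r g * (1 + g * (t2 / r - 1))) <= (1-l) * rpow t2 g) by (apply Rmult_le_compat_l; lra).
 lra. Qed.

Lemma prodR_rpow K f e : (forall k, (k < K)%nat -> 0 <= f k) -> prodR K (fun k => rpow (f k) e) = rpow (prodR K f) e.
Proof. induction K; intros H; simpl. symmetry; apply rpow_one. rewrite IHK by (intros; apply H; lia).
 rewrite rpow_mult; auto. apply prodR_nonneg; intros; apply H; lia. Qed.

Lemma prodR_exp K f : prodR K (fun k => exp (f k)) = exp (sumR K f).
Proof. induction K; simpl. rewrite exp_0; auto. rewrite IHK, exp_plus; auto. Qed.

Lemma amgm_pos m (z : nat -> R) : (1 <= m)%nat -> (forall t, (t < m)%nat -> 0 < z t) ->
  prodR m (fun t => rpow (z t) (1 / INR m)) <= (1 / INR m) * sumR m z.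
Proof. intros Hm Hz. assert (HmR : 0 < INR m) by (apply lt_0_INR; lia).
 set (M := 1 / INR m * sumR m z).
 assert (HM : 0 < M). { unfold M. apply Rmult_lt_0_compat. unfold Rdiv; rewrite Rmult_1_l; apply Rinv_0_lt_compat; auto.
   destruct m; [lia|]. simpl. apply Rplus_le_lt_0_compat. apply sumR_nonneg; intros; left; apply Hz; lia. apply Hz; lia. }
 rewrite (prodR_ext _ _ (fun t => exp (1 / INR m * ln (z t)))).
 2:{ intros k Hk. rewrite rpow_pos by auto. unfold Rpower; auto. }
 rewrite prodR_exp. rewrite <- (exp_ln M) by auto. apply exp_le_mono.
 rewrite sumR_scal.
 assert (sumR m (fun t => ln (z t) - ln M) <= sumR m (fun t => z t / M - 1)).
 { apply sumR_le. intros k Hk. rewrite <- ln_div by auto. apply ln_le_sub1. apply Rdiv_lt_0_compat; auto. }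
 assert (E1 : forall K, sumR K (fun t => z t / M - 1) = sumR K z / M - INR K).
 { clear -HM. induction K; cbn [sumR]; [simpl; field; lra|]. rewrite IHK. rewrite S_INR. field. lra. }
 assert (E2 : forall K, sumR K (fun t => ln (z t) - ln M) = sumR K (fun t => ln (z t)) - INR K * ln M).
 { clear. induction K; cbn [sumR]; [simpl; ring|]. rewrite IHK. rewrite S_INR. ring. }
 rewrite E1, E2 in H.
 assert (Hs : 0 < sumR m z). { destruct m; [lia|]. simpl. apply Rplus_le_lt_0_compat. apply sumR_nonneg; intros; left; apply Hz; lia. apply Hz; lia. }
 assert (E3 : sumR m z / M = INR m) by (unfold M; field; lra).
 rewrite E3 in H.
 assert (sumR m (fun t => ln (z t)) <= INR m * ln M) by lra.
 apply Rmult_le_reg_l with (INR m); auto. replace (INR m * (1 / INR m * sumR m (fun t => ln (z t)))) with (sumR m (fun t => ln (z t))) by (field; lra). lra.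
Qed.

Lemma amgm m (z : nat -> R) : (1 <= m)%nat -> (forall t, (t < m)%nat -> 0 <= z t) ->
  prodR m (fun t => rpow (z t) (1 / INR m)) <= (1 / INR m) * sumR m z.
Proof. intros Hm Hz. destruct (classic (exists t, (t < m)%nat /\ z t = 0)) as [[t [Ht H0]]|Hn].
 - rewrite (prodR_zero _ _ t Ht) by (rewrite H0; apply rpow_zero). apply Rmult_le_pos.
   unfold Rdiv; rewrite Rmult_1_l; left; apply Rinv_0_lt_compat; apply lt_0_INR; lia. apply sumR_nonneg; auto.
 - apply amgm_pos; auto. intros t Ht. destruct (Rle_lt_or_eq_dec 0 (z t) (Hz t Ht)); auto. exfalso; apply Hn; eauto.
Qed.

Lemma prodR_const K q : prodR K (fun _ => q) = q ^ K.
Proof. induction K; simpl; auto. rewrite IHK; ring. Qed.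

Lemma prodR_const_rpow m l : (1 <= m)%nat -> 0 <= l -> prodR m (fun _ => rpow l (1 / INR m)) = l.
Proof. intros Hm Hl. rewrite prodR_const. destruct (Rle_lt_or_eq_dec 0 l Hl) as [h|h].
 - rewrite rpow_pow_nat by auto. replace (INR m * (1 / INR m)) with 1. apply rpow_1; auto.
   field. apply not_0_INR; lia.
 - subst. rewrite rpow_zero. destruct m; [lia|]. simpl; ring. Qed.

Lemma sumR_const1 K : sumR K (fun _ => 1) = INR K.
Proof. induction K; cbn [sumR]. simpl; auto. rewrite IHK, S_INR; auto. Qed.

Definition GM (m : nat) (f : nat -> R) := prodR m (fun t => rpow (f t) (1 / INR m)).

Lemma GM_nonneg m f : 0 <= GM m f.
Proof. unfold GM. apply prodR_nonneg; intros; apply rpow_nonneg. Qed.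

Lemma GM_ext m f g : (forall t, (t < m)%nat -> f t = g t) -> GM m f = GM m g.
Proof. intros H; unfold GM; apply prodR_ext; intros; rewrite H; auto. Qed.

Lemma GM_mult m f g : (forall t, (t < m)%nat -> 0 <= f t) -> (forall t, (t < m)%nat -> 0 <= g t) ->
  GM m (fun t => f t * g t) = GM m f * GM m g.
Proof. intros Hf Hg. unfold GM. rewrite <- prodR_mult. apply prodR_ext. intros. apply rpow_mult; auto. Qed.

Lemma GM_concave m y y' l : (1 <= m)%nat -> (forall t, (t < m)%nat -> 0 <= y t) -> (forall t, (t < m)%nat -> 0 <= y' t) ->
  0 <= l <= 1 ->
  l * GM m y + (1 - l) * GM m y' <= GM m (fun t => l * y t + (1 - l) * y' t).
Proof. intros Hm Hy Hy' Hl. set (w := fun t => l * y t + (1 - l) * y' t).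
 assert (Hw : forall t, (t < m)%nat -> 0 <= w t). { intros t Ht; unfold w. pose proof (Hy t Ht); pose proof (Hy' t Ht).
   apply Rplus_le_le_0_compat; apply Rmult_le_pos; lra. }
 destruct (classic (exists t, (t < m)%nat /\ w t = 0)) as [[t [Ht H0]]|Hn].
 - unfold w in H0. pose proof (Hy t Ht); pose proof (Hy' t Ht).
   assert (A1 : l * y t = 0) by (assert (0 <= l * y t) by (apply Rmult_le_pos; lra); assert (0 <= (1-l) * y' t) by (apply Rmult_le_pos; lra); lra).
   assert (A2 : (1 - l) * y' t = 0) by lra.
   assert (B1 : l * GM m y = 0). { apply Rmult_integral in A1. destruct A1 as [A1|A1]. rewrite A1; ring.
     unfold GM. rewrite (prodR_zero _ _ t Ht) by (rewrite A1; apply rpow_zero). ring. }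
   assert (B2 : (1 - l) * GM m y' = 0). { apply Rmult_integral in A2. destruct A2 as [A2|A2]. rewrite A2; ring.
     unfold GM. rewrite (prodR_zero _ _ t Ht) by (rewrite A2; apply rpow_zero). ring. }
   rewrite B1, B2. pose proof (GM_nonneg m w). lra.
 - assert (Hwp : forall t, (t < m)%nat -> 0 < w t). { intros t Ht. destruct (Rle_lt_or_eq_dec 0 (w t) (Hw t Ht)); auto. exfalso; apply Hn; eauto. }
   set (z := fun t => l * y t / w t). set (z' := fun t => (1 - l) * y' t / w t).
   assert (Hz : forall t, (t < m)%nat -> 0 <= z t). { intros t Ht; unfold z. pose proof (Hy t Ht). pose proof (Hwp t Ht).
     unfold Rdiv. apply Rmult_le_pos. apply Rmult_le_pos; lra. left; apply Rinv_0_lt_compat; auto. }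
   assert (Hz' : forall t, (t < m)%nat -> 0 <= z' t). { intros t Ht; unfold z'. pose proof (Hy' t Ht). pose proof (Hwp t Ht).
     unfold Rdiv. apply Rmult_le_pos. apply Rmult_le_pos; lra. left; apply Rinv_0_lt_compat; auto. }
   pose proof (amgm m z Hm Hz) as G1. pose proof (amgm m z' Hm Hz') as G2. fold (GM m z) in G1. fold (GM m z') in G2.
   assert (S1 : sumR m z + sumR m z' = INR m).
   { rewrite <- sumR_plus. rewrite (sumR_ext _ _ (fun _ => 1)). apply sumR_const1.
     intros t Ht. unfold z, z'. pose proof (Hwp t Ht). unfold w in *. field. lra. }
   assert (GM m z + GM m z' <= 1). { assert (1 / INR m * sumR m z + 1 / INR m * sumR m z' = 1).
     { rewrite <- Rmult_plus_distr_l. rewrite S1. field. apply not_0_INR; lia. } lra. }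
   assert (E1 : GM m z * GM m w = l * GM m y).
   { rewrite <- GM_mult by auto. rewrite (GM_ext _ _ (fun t => l * y t)).
     rewrite GM_mult by (auto; intros; lra). unfold GM at 1. rewrite prodR_const_rpow; auto. lra.
     intros t Ht. unfold z. pose proof (Hwp t Ht). field. lra. }
   assert (E2 : GM m z' * GM m w = (1 - l) * GM m y').
   { rewrite <- GM_mult by auto. rewrite (GM_ext _ _ (fun t => (1 - l) * y' t)).
     rewrite GM_mult by (auto; intros; lra). unfold GM at 1. rewrite prodR_const_rpow; auto. lra.
     intros t Ht. unfold z'. pose proof (Hwp t Ht). field. lra. }
   fold w. rewrite <- E1, <- E2. pose proof (GM_nonneg m w).
   assert ((GM m z + GM m z') * GM m w <= 1 * GM m w) by (apply Rmult_le_compat_r; lra). lra.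
Qed.

Definition comb2 (N : nat) (l : R) (x x' : list R) : list R :=
  vec N (fun t => l * nth t x 0 + (1 - l) * nth t x' 0).
Definition pcomb (n m : nat) (l : R) (p q : pt) : pt :=
  (comb2 n l (fst p) (fst q), comb2 m l (snd p) (snd q)).
Definition convex_set (n m : nat) (B : pt -> Prop) : Prop :=
  forall p q l, B p -> B q -> 0 <= l <= 1 -> B (pcomb n m l p q).

Definition combK (N K : nat) (lam : nat -> R) (px : nat -> list R) : list R :=
  vec N (fun t => sumR K (fun k => lam k * nth t (px k) 0)).

Lemma conv_eq n m A p : conv n m A p -> exists K lam px py,
  (forall k, (k < K)%nat -> 0 <= lam k /\ A (px k, py k)) /\ sumR K lam = 1 /\
  p = (combK n K lam px, combK m K lam py).
Proof. intros [H1 [H2 [K [lam [px [py [H3 [H4 [H5 H6]]]]]]]]]. exists K, lam, px, py. split; auto. split; auto.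
 destruct p as [x y]; simpl in *. f_equal; apply list_ext; unfold combK; rewrite ?vec_length; auto;
 intros t Ht; rewrite vec_nth; try lia; auto. apply H5; lia. apply H6; lia. Qed.

Lemma conv_intro n m A K lam px py : (forall k, (k < K)%nat -> 0 <= lam k /\ A (px k, py k)) -> sumR K lam = 1 ->
  conv n m A (combK n K lam px, combK m K lam py).
Proof. intros H1 H2. unfold conv; simpl. unfold combK. rewrite !vec_length. split; auto. split; auto.
 exists K, lam, px, py. split; [|split; [auto|split]]; auto; intros; rewrite ?vec_nth; auto. Qed.

Lemma conv_sub n m (A B : pt -> Prop) :
  (forall p, A p -> length (fst p) = n /\ length (snd p) = m) ->
  (forall p, A p -> B p) -> convex_set n m B -> forall p, conv n m A p -> B p.
Proof. intros HL HAB HB p Hp. apply conv_eq in Hp. destruct Hp as [K [lam [px [py [H1 [H2 ->]]]]]].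
 revert lam H1 H2. induction K; intros lam H1 H2. simpl in H2; lra.
 simpl in H2. set (L := lam K) in *. assert (HL0 : 0 <= L) by (apply H1; lia).
 assert (Hs : 0 <= sumR K lam) by (apply sumR_nonneg; intros; apply H1; lia).
 destruct (HL (px K, py K)) as [Lx Ly]; [apply H1; lia|]. simpl in Lx, Ly.
 destruct (Rle_lt_or_eq_dec L 1 ltac:(lra)) as [hL|hL].
 - set (s := 1 - L). assert (Hs0 : 0 < s) by (unfold s; lra).
   specialize (IHK (fun k => lam k / s)). 
   assert (Hq : B (combK n K (fun k => lam k / s) px, combK m K (fun k => lam k / s) py)).
   { apply IHK. intros k Hk. split. unfold Rdiv; apply Rmult_le_pos; [apply H1; lia| left; apply Rinv_0_lt_compat; auto]. apply H1; lia.
     unfold Rdiv. rewrite (sumR_ext _ _ (fun k => / s * lam k)) by (intros; ring). rewrite sumR_scal. unfold s. replace (sumR K lam) with (1 - L) by lra. field. lra. }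
   assert (Hpk : B (px K, py K)) by (apply HAB, H1; lia).
   pose proof (HB _ _ s Hq Hpk ltac:(unfold s; lra)) as HH.
   replace (combK n (S K) lam px, combK m (S K) lam py) with
     (pcomb n m s (combK n K (fun k => lam k / s) px, combK m K (fun k => lam k / s) py) (px K, py K)); auto.
   unfold pcomb, comb2, combK; simpl. f_equal; apply list_ext; rewrite ?vec_length; auto; intros t Ht; rewrite !vec_nth; auto;
   simpl; unfold Rdiv;
   rewrite (sumR_ext _ _ (fun k => / s * (lam k * nth t _ 0))) by (intros; ring); rewrite sumR_scal; fold L; unfold s; field; lra.
 - assert (H0 : forall k, (k < K)%nat -> lam k = 0) by (apply sumR_zero_nonneg; [intros; apply H1; lia| lra]).
   replace (combK n (S K) lam px, combK m (S K) lam py) with (px K, py K). apply HAB, H1; lia.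
   unfold combK; simpl. f_equal; apply list_ext; rewrite ?vec_length; auto; intros t Ht; rewrite vec_nth; try lia;
   rewrite (sumR_ext _ _ (fun _ => 0)) by (intros k Hk; rewrite H0; auto; ring); rewrite sumR_const0; fold L; rewrite hL; ring.
Qed.

Lemma conv_convex n m A : convex_set n m (conv n m A).
Proof. intros p q l Hp Hq Hl. apply conv_eq in Hp. apply conv_eq in Hq.
 destruct Hp as [K1 [lam1 [px1 [py1 [H1 [H2 ->]]]]]]. destruct Hq as [K2 [lam2 [px2 [py2 [H3 [H4 ->]]]]]].
 set (lam := fun k => if Nat.ltb k K1 then l * lam1 k else (1 - l) * lam2 (k - K1)%nat).
 set (px := fun k => if Nat.ltb k K1 then px1 k else px2 (k - K1)%nat).
 set (py := fun k => if Nat.ltb k K1 then py1 k else py2 (k - K1)%nat).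
 assert (Hspl : forall (F : nat -> R), sumR (K1 + K2) F = sumR K1 F + sumR K2 (fun k => F (K1 + k)%nat)) by (intros; apply sumR_app).
 assert (E1 : forall g : nat -> R, sumR K1 (fun k => (if Nat.ltb k K1 then l * lam1 k else (1 - l) * lam2 (k - K1)%nat) * g k) = l * sumR K1 (fun k => lam1 k * g k)).
 { intros g. rewrite <- sumR_scal. apply sumR_ext. intros k Hk. destruct (Nat.ltb_spec k K1); [ring|lia]. }
 assert (E2 : forall g : nat -> R, sumR K2 (fun k => (if Nat.ltb (K1 + k) K1 then l * lam1 (K1 + k)%nat else (1 - l) * lam2 (K1 + k - K1)%nat) * g (K1 + k)%nat) = (1 - l) * sumR K2 (fun k => lam2 k * g (K1 + k)%nat)).
 { intros g. rewrite <- sumR_scal. apply sumR_ext. intros k Hk. destruct (Nat.ltb_spec (K1 + k) K1); [lia|].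
   replace (K1 + k - K1)%nat with k by lia. ring. }
 replace (pcomb n m l (combK n K1 lam1 px1, combK m K1 lam1 py1) (combK n K2 lam2 px2, combK m K2 lam2 py2))
   with (combK n (K1 + K2) lam px, combK m (K1 + K2) lam py).
 - apply conv_intro.
   + intros k Hk. unfold lam, px, py. destruct (Nat.ltb_spec k K1).
     * split. apply Rmult_le_pos; [lra|apply H1; auto]. apply H1; auto.
     * split. apply Rmult_le_pos; [lra|apply H3; lia]. apply H3; lia.
   + rewrite Hspl. unfold lam.
     rewrite (sumR_ext K1 _ (fun k => l * lam1 k)) by (intros k Hk; destruct (Nat.ltb_spec k K1); [auto|lia]).
     rewrite (sumR_ext K2 _ (fun k => (1 - l) * lam2 k)) by (intros k Hk; destruct (Nat.ltb_spec (K1 + k) K1); [lia|]; replace (K1 + k - K1)%nat with k by lia; auto).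
     rewrite !sumR_scal, H2, H4. ring.
 - unfold pcomb, comb2, combK; simpl. f_equal; apply list_ext; rewrite ?vec_length; auto; intros t Ht; rewrite !vec_nth; auto;
   rewrite Hspl; unfold lam, px, py.
   + rewrite (sumR_ext K1 _ (fun k => l * (lam1 k * nth t (px1 k) 0)))
       by (intros k Hk; destruct (Nat.ltb_spec k K1); [ring|lia]).
     rewrite (sumR_ext K2 _ (fun k => (1 - l) * (lam2 k * nth t (px2 k) 0)))
       by (intros k Hk; destruct (Nat.ltb_spec (K1 + k) K1); [lia|]; replace (K1 + k - K1)%nat with k by lia; ring).
     rewrite !sumR_scal. auto.
   + rewrite (sumR_ext K1 _ (fun k => l * (lam1 k * nth t (py1 k) 0)))
       by (intros k Hk; destruct (Nat.ltb_spec k K1); [ring|lia]).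
     rewrite (sumR_ext K2 _ (fun k => (1 - l) * (lam2 k * nth t (py2 k) 0)))
       by (intros k Hk; destruct (Nat.ltb_spec (K1 + k) K1); [lia|]; replace (K1 + k - K1)%nat with k by lia; ring).
     rewrite !sumR_scal. auto.
Qed.

Lemma conv_incl n m (A : pt -> Prop) p : A p -> length (fst p) = n -> length (snd p) = m -> conv n m A p.
Proof. intros H1 H2 H3. repeat split; auto. exists 1%nat, (fun _ => 1), (fun _ => fst p), (fun _ => snd p).
 repeat split; simpl; try lra. destruct p; auto. intros; ring. intros; ring. Qed.

Lemma conv_mono n m (A A' : pt -> Prop) p : (forall q, A q -> A' q) -> conv n m A p -> conv n m A' p.
Proof. intros H [H1 [H2 [K [lam [px [py [H3 H4]]]]]]]. repeat split; auto. exists K, lam, px, py. split; auto.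
 intros k Hk; split; apply H3 in Hk; [tauto|apply H; tauto]. Qed.

Fixpoint rinsert (x : R) (l : list R) : list R :=
  match l with
  | [] => [x]
  | h :: t => if Rle_dec h x then x :: h :: t else h :: rinsert x t
  end.
Fixpoint rsort (l : list R) : list R :=
  match l with [] => [] | h :: t => rinsert h (rsort t) end.

Lemma rinsert_perm x l : Permutation (x :: l) (rinsert x l).
Proof. induction l; simpl; auto. destruct (Rle_dec a x); auto.
 eapply perm_trans. apply perm_swap. apply perm_skip; auto. Qed.

Lemma rsort_perm l : Permutation l (rsort l).
Proof. induction l; simpl; auto. eapply perm_trans. apply perm_skip; eauto. apply rinsert_perm. Qed.

Lemma rinsert_sorted x l : Sorted Rge l -> Sorted Rge (rinsert x l).
Proof. induction 1; simpl. repeat constructor. destruct (Rle_dec a x).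
 - constructor. constructor; auto. constructor; lra.
 - constructor. auto. inversion H0; subst; simpl. constructor; lra.
   destruct (Rle_dec b x); constructor; lra. Qed.

Lemma rsort_sorted l : Sorted Rge (rsort l).
Proof. induction l; simpl. constructor. apply rinsert_sorted; auto. Qed.

Lemma sorted_nonincr l : Sorted Rge l -> nonincr (length l) l.
Proof. induction 1; unfold nonincr; simpl; intros t Ht; [lia|].
 destruct t. simpl. inversion H0; subst. simpl in Ht; lia. simpl. lra.
 replace (S t + 1)%nat with (S (t + 1)) by lia. simpl. apply IHSorted. lia. Qed.

Lemma nonincr_sorted l : nonincr (length l) l -> Sorted Rge l.
Proof. induction l; intros H; constructor.
 apply IHl. intros t Ht. specialize (H (S t)). simpl in H. apply H. lia.
 destruct l; constructor. specialize (H 0%nat). simpl in H. apply H. lia. Qed.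

Lemma nonincr_mono N l t t' : nonincr N l -> (t <= t')%nat -> (t' < N)%nat -> nth t l 0 >= nth t' l 0.
Proof. intros H Htt. induction Htt; intros; [lra|]. specialize (H m). replace (m+1)%nat with (S m) in H by lia.
 assert (nth t l 0 >= nth m l 0) by (apply IHHtt; lia). specialize (H ltac:(lia)). lra. Qed.

Definition Pj (j : nat) (l : list R) : R := sumR j (fun t => nth t l 0).
Definition Phi (j : nat) (l : list R) (th : R) : R :=
  INR j * th + sumR (length l) (fun t => Rmax (nth t l 0 - th) 0).

Lemma Phi_perm j l l' th : Permutation l l' -> Phi j l th = Phi j l' th.
Proof. intros H. unfold Phi. f_equal.
 rewrite <- !(sum_list_map (fun v => Rmax (v - th) 0)). apply sum_list_perm. apply Permutation_map; auto. Qed.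

Lemma P_le_Phi j l th : (j <= length l)%nat -> Pj j l <= Phi j l th.
Proof. intros H. unfold Pj, Phi.
 assert (sumR j (fun t => nth t l 0) <= sumR j (fun t => th + Rmax (nth t l 0 - th) 0)).
 { apply sumR_le. intros. pose proof (Rmax_l (nth k l 0 - th) 0). lra. }
 rewrite sumR_plus in H0. rewrite (sumR_ext _ (fun _ => th) (fun _ => th * 1)) in H0 by (intros; ring).
 rewrite sumR_scal, (sumR_const1 j) in H0.
 assert (sumR j (fun t => Rmax (nth t l 0 - th) 0) <= sumR (length l) (fun t => Rmax (nth t l 0 - th) 0)).
 { apply sumR_mono_K; auto. intros; apply Rmax_r. }
 lra. Qed.

Lemma sumR_abs_bound K f k : (k < K)%nat -> f k <= sumR K (fun t => Rabs (f t)).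
Proof. intros Hk. induction K; [lia|]. simpl. destruct (Nat.eq_dec k K).
 - subst. assert (0 <= sumR K (fun t => Rabs (f t))) by (apply sumR_nonneg; intros; apply Rabs_pos).
   pose proof (Rle_abs (f K)). lra.
 - assert (f k <= sumR K (fun t => Rabs (f t))) by (apply IHK; lia). pose proof (Rabs_pos (f K)). lra. Qed.

Lemma Phi_attain j l : nonincr (length l) l -> (j <= length l)%nat -> exists th, Phi j l th = Pj j l.
Proof. intros Hs Hj. unfold Phi, Pj. destruct j.
 - exists (sumR (length l) (fun t => Rabs (nth t l 0))). simpl. rewrite Rmult_0_l, Rplus_0_l.
   rewrite (sumR_ext _ _ (fun _ => 0)). apply sumR_const0. intros k Hk.
   pose proof (sumR_abs_bound (length l) (fun t => nth t l 0) k Hk). simpl in H. apply Rmax_right. lra.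
 - exists (nth j l 0). replace (length l) with (S j + (length l - S j))%nat by lia. rewrite sumR_app.
   rewrite (sumR_ext (length l - S j) _ (fun _ => 0)). rewrite sumR_const0.
   rewrite (sumR_ext (S j) _ (fun t => nth t l 0 + - nth j l 0)). rewrite sumR_plus.
   rewrite (sumR_ext _ (fun _ => - nth j l 0) (fun _ => - nth j l 0 * 1)) by (intros; ring). rewrite sumR_scal, sumR_const1. ring.
   intros k Hk. apply Rmax_left. pose proof (nonincr_mono _ _ k j Hs ltac:(lia) ltac:(lia)). lra.
   intros k Hk. apply Rmax_right. pose proof (nonincr_mono _ _ j (S j + k) Hs ltac:(lia) ltac:(lia)). lra.
Qed.

Lemma Rmax_convex x y l : 0 <= l <= 1 -> Rmax (l * x + (1 - l) * y) 0 <= l * Rmax x 0 + (1 - l) * Rmax y 0.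
Proof. intros Hl. apply Rmax_lub.
 - assert (l * x <= l * Rmax x 0) by (apply Rmult_le_compat_l; [lra|apply Rmax_l]).
   assert ((1 - l) * y <= (1 - l) * Rmax y 0) by (apply Rmult_le_compat_l; [lra|apply Rmax_l]). lra.
 - assert (0 <= l * Rmax x 0) by (apply Rmult_le_pos; [lra|apply Rmax_r]).
   assert (0 <= (1-l) * Rmax y 0) by (apply Rmult_le_pos; [lra|apply Rmax_r]). lra. Qed.

Lemma Phi_convex N j x x' l th th' : length x = N -> length x' = N -> 0 <= l <= 1 ->
  Phi j (comb2 N l x x') (l * th + (1 - l) * th') <= l * Phi j x th + (1 - l) * Phi j x' th'.
Proof. intros H1 H2 Hl. unfold Phi, comb2. rewrite vec_length, H1, H2.
 rewrite (sumR_ext N _ (fun t => Rmax (l * (nth t x 0 - th) + (1 - l) * (nth t x' 0 - th')) 0)).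
 2:{ intros k Hk. rewrite vec_nth; auto. f_equal. ring. }
 assert (sumR N (fun t => Rmax (l * (nth t x 0 - th) + (1 - l) * (nth t x' 0 - th')) 0) <=
         sumR N (fun t => l * Rmax (nth t x 0 - th) 0 + (1 - l) * Rmax (nth t x' 0 - th') 0)).
 { apply sumR_le; intros; apply Rmax_convex; auto. }
 rewrite sumR_plus, !sumR_scal in H. lra. Qed.

Lemma Pj_firstn j l : (j <= length l)%nat -> sum_list (firstn j l) = Pj j l.
Proof. apply sum_list_firstn. Qed.

Lemma major_intro N u x : length u = N -> length x = N -> nonincr N u ->
  (forall j, (j < N)%nat -> exists th, Phi j x th <= Pj j u) -> sum_list u = sum_list x -> majorizes u x.
Proof. intros Hu Hx Hs Hj Hsum. split; [congruence|]. exists u, (rsort x).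
 assert (Hp := rsort_perm x). assert (HL : length (rsort x) = N) by (rewrite <- (Permutation_length Hp); auto).
 repeat split; auto. apply nonincr_sorted; rewrite Hu; auto. apply rsort_sorted.
 intros j Hj'. rewrite !Pj_firstn by lia. destruct (Hj j ltac:(lia)) as [th Hth].
 pose proof (P_le_Phi j (rsort x) th ltac:(lia)). rewrite <- (Phi_perm j x) in H by auto. lra. Qed.

Lemma major_elim N u x : majorizes u x -> length u = N -> nonincr N u ->
  (forall j, (j < N)%nat -> exists th, Phi j x th <= Pj j u) /\ sum_list u = sum_list x /\ length x = N.
Proof. intros [HL [us [xs [Pu [Su [Px [Sx [Hj Hsum]]]]]]]] Hu Hs. split; [|split; auto; congruence].
 intros j Hjn. assert (Lx : length xs = N) by (rewrite <- (Permutation_length Px); congruence).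
 assert (Lu : length us = N) by (rewrite <- (Permutation_length Pu); congruence).
 destruct (Phi_attain j xs) as [th Hth]. apply sorted_nonincr; auto. lia.
 destruct (Phi_attain j u) as [thu Hthu]. rewrite Hu; auto. lia.
 exists th. rewrite (Phi_perm j x xs) by auto. rewrite Hth.
 specialize (Hj j ltac:(lia)). rewrite !Pj_firstn in Hj by lia.
 pose proof (P_le_Phi j us thu ltac:(lia)). rewrite <- (Phi_perm j u us) in H by auto. lra. Qed.

Lemma nonincr_comb2 N u u' l : length u = N -> length u' = N -> 0 <= l <= 1 -> nonincr N u -> nonincr N u' -> nonincr N (comb2 N l u u').
Proof. intros H1 H2 Hl Hu Hu' t Ht. unfold comb2. rewrite !vec_nth by lia. specialize (Hu t Ht). specialize (Hu' t Ht).
 assert (l * nth t u 0 >= l * nth (t+1) u 0) by (apply Rmult_ge_compat_l; lra).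
 assert ((1-l) * nth t u' 0 >= (1-l) * nth (t+1) u' 0) by (apply Rmult_ge_compat_l; lra). lra. Qed.

Lemma Pj_comb2 N j u u' l : (j <= N)%nat -> Pj j (comb2 N l u u') = l * Pj j u + (1 - l) * Pj j u'.
Proof. intros H. unfold Pj, comb2. rewrite <- !sumR_scal, <- sumR_plus. apply sumR_ext. intros; rewrite vec_nth; auto; lia. Qed.

Lemma sum_comb2 N u u' l : length u = N -> length u' = N -> sum_list (comb2 N l u u') = l * sum_list u + (1 - l) * sum_list u'.
Proof. intros H1 H2. rewrite !sum_list_nth. unfold comb2. rewrite vec_length, H1, H2. rewrite <- !sumR_scal, <- sumR_plus.
 apply sumR_ext. intros; rewrite vec_nth; auto. Qed.

Lemma major_comb N u u' x x' l : length u = N -> length u' = N -> nonincr N u -> nonincr N u' -> 0 <= l <= 1 ->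
  majorizes u x -> majorizes u' x' -> majorizes (comb2 N l u u') (comb2 N l x x').
Proof. intros Hu Hu' Su Su' Hl M M'. destruct (major_elim N u x M Hu Su) as [J [S Lx]].
 destruct (major_elim N u' x' M' Hu' Su') as [J' [S' Lx']].
 apply (major_intro N). unfold comb2; apply vec_length. unfold comb2; apply vec_length. apply nonincr_comb2; auto.
 intros j Hj. destruct (J j Hj) as [th H1]. destruct (J' j Hj) as [th' H2]. exists (l * th + (1 - l) * th').
 pose proof (Phi_convex N j x x' l th th' Lx Lx' Hl). rewrite Pj_comb2 by lia.
 assert (l * Phi j x th <= l * Pj j u) by (apply Rmult_le_compat_l; lra).
 assert ((1-l) * Phi j x' th' <= (1-l) * Pj j u') by (apply Rmult_le_compat_l; lra). lra.
 rewrite !sum_comb2 by auto. rewrite S, S'. auto. Qed.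

Lemma major_rsort y : majorizes (rsort y) y.
Proof. assert (Hp := rsort_perm y). assert (HL : length (rsort y) = length y) by (symmetry; apply Permutation_length; auto).
 apply (major_intro (length y)); auto. rewrite <- HL. apply sorted_nonincr, rsort_sorted.
 intros j Hj. destruct (Phi_attain j (rsort y)) as [th Hth]. apply sorted_nonincr, rsort_sorted. lia.
 exists th. rewrite (Phi_perm j y (rsort y)); auto. lra.
 symmetry; apply sum_list_perm; auto. Qed.

Definition permute (N : nat) (f : nat -> nat) (l : list R) : list R := vec N (fun t => nth (f t) l 0).

Lemma permute_perm N f l : length l = N -> FinFun.bFun N f -> FinFun.bInjective N f -> Permutation l (permute N f l).
Proof. intros H1 H2 H3. apply (Permutation_nth l (permute N f l) 0). simpl. unfold permute. rewrite vec_length.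
 split; auto. exists f. split. rewrite H1; auto. split. rewrite H1; auto. intros t Ht. rewrite vec_nth; auto. lia. Qed.

Lemma perm_permute l l' : Permutation l l' -> exists f, FinFun.bFun (length l) f /\ FinFun.bInjective (length l) f /\
  l' = permute (length l) f l.
Proof. intros H. apply (Permutation_nth l l' 0) in H. simpl in H. destruct H as [H1 [f [H2 [H3 H4]]]].
 exists f. split; auto. split; auto. apply list_ext. unfold permute; rewrite vec_length; auto.
 intros t Ht. unfold permute. rewrite vec_nth by lia. apply H4. lia. Qed.

Lemma ex_first (P : nat -> Prop) t0 : P t0 -> exists t, P t /\ (t <= t0)%nat /\ forall t', (t' < t)%nat -> ~ P t'.
Proof. induction t0 as [t0 IH] using (well_founded_induction lt_wf). intros H.
 destruct (classic (exists t', (t' < t0)%nat /\ P t')) as [[t' [H1 H2]]|Hn].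
 - destruct (IH t' H1 H2) as [t [A1 [A2 A3]]]. exists t. repeat split; auto. lia.
 - exists t0. repeat split; auto. intros t' Ht' Hp. apply Hn; eauto. Qed.

Lemma ex_last (P : nat -> Prop) N t0 : P t0 -> (t0 < N)%nat ->
  exists t, P t /\ (t0 <= t < N)%nat /\ forall t', (t < t' < N)%nat -> ~ P t'.
Proof. remember (N - t0)%nat as d. revert t0 Heqd. induction d as [d IH] using (well_founded_induction lt_wf).
 intros t0 Hd H Ht0. destruct (classic (exists t', (t0 < t' < N)%nat /\ P t')) as [[t' [H1 H2]]|Hn].
 - destruct (IH (N - t')%nat ltac:(lia) t' eq_refl H2 ltac:(lia)) as [t [A1 [A2 A3]]]. exists t. repeat split; auto; lia.
 - exists t0. repeat split; auto. intros t' Ht' Hp. apply Hn; eauto. Qed.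

Fixpoint dcount (N : nat) (v y : list R) : nat :=
  match N with O => O | S N' => (dcount N' v y + if Req_EM_T (nth N' v 0%R) (nth N' y 0%R) then 0 else 1)%nat end.

Lemma dcount_le N v v' y : (forall t, (t < N)%nat -> nth t v 0 = nth t y 0 -> nth t v' 0 = nth t y 0) ->
  (dcount N v' y <= dcount N v y)%nat.
Proof. induction N; simpl; intros H; auto. assert (IH := IHN ltac:(intros; apply H; auto)).
 destruct (Req_EM_T (nth N v 0) (nth N y 0)) as [E1|E1]; destruct (Req_EM_T (nth N v' 0) (nth N y 0)) as [E2|E2]; try lia.
 exfalso; apply E2; apply H; auto. Qed.

Lemma dcount_lt N v v' y t0 : (forall t, (t < N)%nat -> nth t v 0 = nth t y 0 -> nth t v' 0 = nth t y 0) ->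
  (t0 < N)%nat -> nth t0 v 0 <> nth t0 y 0 -> nth t0 v' 0 = nth t0 y 0 -> (dcount N v' y < dcount N v y)%nat.
Proof. induction N; intros H Ht0 H1 H2; [lia|]. simpl. destruct (Nat.eq_dec t0 N).
 - subst. assert (IH := dcount_le N v v' y ltac:(intros; apply H; auto)).
   destruct (Req_EM_T (nth N v 0) (nth N y 0)); destruct (Req_EM_T (nth N v' 0) (nth N y 0)); try lia; contradiction.
 - assert (IH := IHN ltac:(intros; apply H; auto) ltac:(lia) H1 H2).
   destruct (Req_EM_T (nth N v 0) (nth N y 0)) as [E1|E1]; destruct (Req_EM_T (nth N v' 0) (nth N y 0)) as [E2|E2]; try lia.
   exfalso; apply E2; apply H; auto. Qed.

Lemma Pj_S j l : Pj (S j) l = Pj j l + nth j l 0.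
Proof. reflexivity. Qed.

Definition swapf (j k : nat) (t : nat) : nat := if Nat.eqb t j then k else if Nat.eqb t k then j else t.

Lemma swapf_bij N j k : (j < N)%nat -> (k < N)%nat -> FinFun.bFun N (swapf j k) /\ FinFun.bInjective N (swapf j k).
Proof. intros Hj Hk. split.
 - intros t Ht. unfold swapf. destruct (Nat.eqb_spec t j); destruct (Nat.eqb_spec t k); lia.
 - intros t t' Ht Ht'. unfold swapf. destruct (Nat.eqb_spec t j); destruct (Nat.eqb_spec t k);
   destruct (Nat.eqb_spec t' j); destruct (Nat.eqb_spec t' k); lia. Qed.

Section HLP.
Variable N : nat.
Variable Q : list R -> Prop.
Hypothesis Qperm : forall z f, Q z -> FinFun.bFun N f -> FinFun.bInjective N f -> Q (permute N f z).
Hypothesis Qcomb : forall z z' l, Q z -> Q z' -> 0 <= l <= 1 -> Q (comb2 N l z z').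
Hypothesis Qlen : forall z, Q z -> length z = N.

Lemma hlp_step v x : Q v -> nonincr N v -> nonincr N x -> length x = N ->
  (forall j, (j < N)%nat -> Pj j x <= Pj j v) -> Pj N x = Pj N v ->
  (exists t0, (t0 < N)%nat /\ nth t0 v 0 <> nth t0 x 0) ->
  exists v', Q v' /\ nonincr N v' /\ (forall j, (j < N)%nat -> Pj j x <= Pj j v') /\ Pj N x = Pj N v' /\
    (dcount N v' x < dcount N v x)%nat.
Proof. intros Qv Sv Sx Lx HP HN [t0 [Ht0 Hne]].
 assert (Lv : length v = N) by auto.
 destruct (ex_first (fun t => (t < N)%nat /\ nth t v 0 <> nth t x 0) t0 (conj Ht0 Hne)) as [t1 [[Ht1 Hne1] [_ Hmin1]]].
 assert (Heq1 : Pj t1 x = Pj t1 v).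
 { unfold Pj. apply sumR_ext. intros k Hk. destruct (Req_EM_T (nth k x 0) (nth k v 0)); auto.
   exfalso. apply (Hmin1 k Hk). split; [lia|auto]. }
 assert (Hlt1 : nth t1 x 0 < nth t1 v 0).
 { assert (HH : Pj (S t1) x <= Pj (S t1) v). { destruct (Nat.eq_dec (S t1) N) as [e|e]. rewrite e; lra. apply HP; lia. }
   rewrite !Pj_S in HH. lra. }
 destruct (ex_last (fun t => nth t x 0 < nth t v 0) N t1 Hlt1 Ht1) as [j [Hj [Hjr Hjmax]]].
 assert (Hex : exists t, (j < t)%nat /\ (t < N)%nat /\ nth t x 0 > nth t v 0).
 { apply NNPP. intros Hn.
   assert (E : forall t, (j < t < N)%nat -> nth t x 0 = nth t v 0).
   { intros t Ht. assert (~ nth t x 0 < nth t v 0) by (apply Hjmax; lia).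
     assert (~ nth t x 0 > nth t v 0) by (intros Hc; apply Hn; exists t; repeat split; lia || auto). lra. }
   assert (D1 : Pj N x - Pj (S j) x <= Pj N v - Pj (S j) v) by (apply sumR_diff_le; [lia|intros; rewrite E; lra || lia]).
   assert (D2 : Pj N v - Pj (S j) v <= Pj N x - Pj (S j) x) by (apply sumR_diff_le; [lia|intros; rewrite E; lra || lia]).
   assert (Pj j x <= Pj j v) by (apply HP; lia). rewrite !Pj_S in D1, D2. lra. }
 destruct Hex as [k0 Hk0].
 destruct (ex_first (fun t => (j < t)%nat /\ (t < N)%nat /\ nth t x 0 > nth t v 0) k0 Hk0) as [k [[Hjk [HkN Hk]] [_ Hkmin]]].
 assert (Emid : forall t, (j < t < k)%nat -> nth t x 0 = nth t v 0).
 { intros t Ht. assert (~ nth t x 0 < nth t v 0) by (apply Hjmax; lia).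
   assert (~ nth t x 0 > nth t v 0) by (intros Hc; apply (Hkmin t); [lia| repeat split; lia || auto]). lra. }
 set (dl := Rmin (nth j v 0 - nth j x 0) (nth k x 0 - nth k v 0)).
 assert (Hdl : 0 < dl) by (unfold dl; apply Rmin_glb_lt; lra).
 assert (Hdl1 : dl <= nth j v 0 - nth j x 0) by apply Rmin_l.
 assert (Hdl2 : dl <= nth k x 0 - nth k v 0) by apply Rmin_r.
 assert (Sxjk : nth j x 0 >= nth k x 0) by (apply (nonincr_mono N); auto; lia).
 set (v' := vec N (fun t => if Nat.eqb t j then nth j v 0 - dl else if Nat.eqb t k then nth k v 0 + dl else nth t v 0)).
 assert (Nv' : forall t, (t < N)%nat -> nth t v' 0 = if Nat.eqb t j then nth j v 0 - dl else if Nat.eqb t k then nth k v 0 + dl else nth t v 0)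
   by (intros; unfold v'; rewrite vec_nth; auto).
 assert (Hjk' : j <> k) by lia.
 exists v'. split; [|split; [|split; [|split]]].
 - set (lam := 1 - dl / (nth j v 0 - nth k v 0)).
   assert (Hvjk : 0 < nth j v 0 - nth k v 0) by lra.
   assert (Hlam : 0 <= lam <= 1).
   { unfold lam. assert (dl / (nth j v 0 - nth k v 0) <= 1). { apply Rmult_le_reg_r with (nth j v 0 - nth k v 0); auto.
       unfold Rdiv. rewrite Rmult_assoc, Rinv_l by lra. lra. }
     assert (0 <= dl / (nth j v 0 - nth k v 0)) by (apply Rmult_le_pos; [lra|left; apply Rinv_0_lt_compat; lra]). lra. }
   destruct (swapf_bij N j k) as [B1 B2]; try lia.
   replace v' with (comb2 N lam v (permute N (swapf j k) v)).
   apply Qcomb; auto.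
   apply list_ext. unfold comb2. rewrite vec_length. unfold v' at 1. rewrite vec_length. auto. intros t Ht. rewrite ?vec_length in Ht.
   unfold comb2 in Ht. rewrite vec_length in Ht. unfold comb2 at 1. rewrite vec_nth by lia. rewrite Nv' by lia. unfold permute. rewrite vec_nth by auto. unfold swapf.
   destruct (Nat.eqb_spec t j); destruct (Nat.eqb_spec t k); try lia.
   + subst t. unfold lam. field. lra.
   + subst t. unfold lam. field. lra.
   + unfold lam; ring.
 - intros t Ht. rewrite !Nv' by lia. assert (Svt := Sv t Ht).
   destruct (Nat.eqb_spec t j); destruct (Nat.eqb_spec t k); destruct (Nat.eqb_spec (t+1) j); destruct (Nat.eqb_spec (t+1) k); try lia.
   + subst. lra.
   + subst. assert (nth (j+1) x 0 = nth (j+1) v 0) by (apply Emid; lia).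
     assert (nth j x 0 >= nth (j+1) x 0) by (apply Sx; lia). lra.
   + subst. assert (nth (k+1) v 0 <= nth k v 0) by (apply Sv in Ht; lra). lra.
   + subst. lra.
   + assert (nth t x 0 = nth t v 0) by (apply Emid; lia). assert (nth t x 0 >= nth k x 0) by (apply (nonincr_mono N); auto; lia).
     rewrite <- e in *. lra.
   + lra.
 - assert (PV : forall l, (l <= N)%nat -> Pj l v' = Pj l v - (if Nat.ltb j l then dl else 0) + (if Nat.ltb k l then dl else 0)).
   { induction l; intros Hl. unfold Pj; simpl. destruct (Nat.ltb_spec j 0); destruct (Nat.ltb_spec k 0); try lia. ring.
     rewrite !Pj_S. rewrite IHl by lia. rewrite Nv' by lia.
     destruct (Nat.eqb_spec l j); destruct (Nat.eqb_spec l k); destruct (Nat.ltb_spec j l); destruct (Nat.ltb_spec k l);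
     destruct (Nat.ltb_spec j (S l)); destruct (Nat.ltb_spec k (S l)); try lia; subst; ring. }
   intros l Hl. rewrite PV by lia. assert (HPl := HP l Hl).
   destruct (Nat.ltb_spec j l); destruct (Nat.ltb_spec k l).
   + lra.
   +
     assert (D1 : Pj l x - Pj (S j) x <= Pj l v - Pj (S j) v) by (apply sumR_diff_le; [lia|intros; rewrite Emid; lra || lia]).
     assert (D2 : Pj l v - Pj (S j) v <= Pj l x - Pj (S j) x) by (apply sumR_diff_le; [lia|intros; rewrite Emid; lra || lia]).
     assert (Pj j x <= Pj j v) by (apply HP; lia). rewrite !Pj_S in D1, D2. lra.
   + lia.
   + lra.
 - assert (PV : forall l, (l <= N)%nat -> Pj l v' = Pj l v - (if Nat.ltb j l then dl else 0) + (if Nat.ltb k l then dl else 0)).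
   { induction l; intros Hl. unfold Pj; simpl. destruct (Nat.ltb_spec j 0); destruct (Nat.ltb_spec k 0); try lia. ring.
     rewrite !Pj_S. rewrite IHl by lia. rewrite Nv' by lia.
     destruct (Nat.eqb_spec l j); destruct (Nat.eqb_spec l k); destruct (Nat.ltb_spec j l); destruct (Nat.ltb_spec k l);
     destruct (Nat.ltb_spec j (S l)); destruct (Nat.ltb_spec k (S l)); try lia; subst; ring. }
   rewrite PV by lia. destruct (Nat.ltb_spec j N); destruct (Nat.ltb_spec k N); try lia. lra.
 - assert (Hmono : forall t, (t < N)%nat -> nth t v 0 = nth t x 0 -> nth t v' 0 = nth t x 0).
   { intros t Ht He. rewrite Nv' by auto. destruct (Nat.eqb_spec t j); destruct (Nat.eqb_spec t k); subst; try lra; auto. }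
   unfold dl in *. destruct (Rle_dec (nth j v 0 - nth j x 0) (nth k x 0 - nth k v 0)).
   + apply (dcount_lt N v v' x j Hmono); try lia. lra. rewrite Nv' by lia. rewrite Nat.eqb_refl.
     rewrite Rmin_left by auto. ring.
   + apply (dcount_lt N v v' x k Hmono); try lia. lra. rewrite Nv' by lia. destruct (Nat.eqb_spec k j); try lia. rewrite Nat.eqb_refl.
     rewrite Rmin_right by lra. ring.
Qed.

Lemma hlp D v x : Q v -> nonincr N v -> nonincr N x -> length x = N ->
  (forall j, (j < N)%nat -> Pj j x <= Pj j v) -> Pj N x = Pj N v -> (dcount N v x <= D)%nat -> Q x.
Proof. revert v. induction D; intros v Qv Sv Sx Lx HP HN HD.
 - destruct (classic (exists t0, (t0 < N)%nat /\ nth t0 v 0 <> nth t0 x 0)) as [Hex|Hn].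
   + destruct (hlp_step v x Qv Sv Sx Lx HP HN Hex) as [v' [_ [_ [_ [_ Hlt]]]]]. lia.
   + replace x with v; auto. apply list_ext. rewrite (Qlen v Qv); auto. intros t Ht.
     apply NNPP; intros Hc; apply Hn. exists t. split; auto. rewrite (Qlen v Qv) in Ht; auto.
 - destruct (classic (exists t0, (t0 < N)%nat /\ nth t0 v 0 <> nth t0 x 0)) as [Hex|Hn].
   + destruct (hlp_step v x Qv Sv Sx Lx HP HN Hex) as [v' [Q' [S' [HP' [HN' Hlt]]]]]. apply (IHD v'); auto. lia.
   + replace x with v; auto. apply list_ext. rewrite (Qlen v Qv); auto. intros t Ht.
     apply NNPP; intros Hc; apply Hn. exists t. split; auto. rewrite (Qlen v Qv) in Ht; auto.
Qed.

Lemma rado v y : majorizes v y -> Q v -> Q y.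
Proof. intros [HL [vs [ys [Pv [Sv [Py [Sy [Hj Hsum]]]]]]]] Qv.
 assert (Lv : length v = N) by auto.
 assert (Lvs : length vs = N) by (rewrite <- (Permutation_length Pv); auto).
 assert (Lys : length ys = N) by (rewrite <- (Permutation_length Py); congruence).
 destruct (perm_permute v vs Pv) as [f [F1 [F2 ->]]]. rewrite Lv in *.
 assert (Qvs : Q (permute N f v)) by auto.
 assert (Qys : Q ys).
 { apply (hlp (dcount N (permute N f v) ys) (permute N f v)); auto.
   rewrite <- Lvs at 1. apply sorted_nonincr; auto. rewrite <- Lys at 1. apply sorted_nonincr; auto.
   intros j Hj'. specialize (Hj j ltac:(lia)). rewrite !Pj_firstn in Hj by lia. lra.
   assert (E1 : Pj N ys = sum_list ys) by (unfold Pj; rewrite sum_list_nth, Lys; auto).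
   assert (E2 : Pj N (permute N f v) = sum_list (permute N f v)) by (unfold Pj; rewrite sum_list_nth; unfold permute; rewrite vec_length; auto).
   rewrite E1, E2. rewrite <- (sum_list_perm _ _ Pv), <- (sum_list_perm _ _ Py). auto. }
 destruct (perm_permute ys y (Permutation_sym Py)) as [g [G1 [G2 ->]]]. rewrite Lys in *. auto.
Qed.
End HLP.

Section Prob.
Variables (n m : nat) (a b c d alpha beta : R).
Hypotheses (hn : (1 <= n)%nat) (hm : (1 <= m)%nat) (ha : 0 <= a) (hab : a < b) (hc : 0 <= c) (hcd : c < d)
  (halpha : 0 < alpha) (hbeta : 0 < beta).

Notation S := (inS n m a b c d alpha beta).
Notation T := (inT n m a b c d alpha beta).

Lemma inS_len p : S p -> length (fst p) = n /\ length (snd p) = m.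
Proof. intros [[H1 [H2 _]] _]; auto. Qed.

Lemma inT_S p : T p -> S p.
Proof. intros [[i [j [_ [_ [H _]]]]]|[j [_ [H _]]]]; auto. Qed.

Lemma inS_perm_x x y f : S (x, y) -> FinFun.bFun n f -> FinFun.bInjective n f -> S (permute n f x, y).
Proof. intros [[H1 [H2 [H3 H4]]] H5] F1 F2. simpl in *. split. split; simpl. unfold permute; apply vec_length.
 split; auto. split; auto. intros t Ht. unfold permute; rewrite vec_nth by auto. apply H3; apply F1; auto.
 simpl. rewrite <- (prod_list_perm (map (fun t => rpow t beta) x) (map (fun t => rpow t beta) (permute n f x))); auto. apply Permutation_map, permute_perm; auto. Qed.

Lemma inS_perm_y x y f : S (x, y) -> FinFun.bFun m f -> FinFun.bInjective m f -> S (x, permute m f y).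
Proof. intros [[H1 [H2 [H3 H4]]] H5] F1 F2. simpl in *. split. split; simpl; auto. split. unfold permute; apply vec_length.
 split; auto. intros t Ht. unfold permute; rewrite vec_nth by auto. apply H4; apply F1; auto.
 simpl. rewrite <- (prod_list_perm (map (fun t => rpow t alpha) y) (map (fun t => rpow t alpha) (permute m f y))); auto. apply Permutation_map, permute_perm; auto. Qed.

Lemma conv_perm_x x y f : conv n m S (x, y) -> FinFun.bFun n f -> FinFun.bInjective n f -> conv n m S (permute n f x, y).
Proof. intros [H1 [H2 [K [lam [px [py [H3 [H4 [H5 H6]]]]]]]]] F1 F2. simpl in *.
 split. unfold permute; apply vec_length. split; auto. exists K, lam, (fun k => permute n f (px k)), py.
 split; [|split; [auto|split; auto]].
 - intros k Hk. destruct (H3 k Hk) as [A1 A2]. split; auto. apply inS_perm_x; auto.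
 - intros t Ht. simpl. unfold permute at 1. rewrite vec_nth by auto. rewrite H5 by (apply F1; auto).
   apply sumR_ext. intros k Hk. unfold permute. rewrite vec_nth; auto. Qed.

Lemma conv_perm_y x y f : conv n m S (x, y) -> FinFun.bFun m f -> FinFun.bInjective m f -> conv n m S (x, permute m f y).
Proof. intros [H1 [H2 [K [lam [px [py [H3 [H4 [H5 H6]]]]]]]]] F1 F2. simpl in *.
 split; auto. split. unfold permute; apply vec_length. exists K, lam, px, (fun k => permute m f (py k)).
 split; [|split; [auto|split; auto]].
 - intros k Hk. destruct (H3 k Hk) as [A1 A2]. split; auto. apply inS_perm_y; auto.
 - intros t Ht. simpl. unfold permute at 1. rewrite vec_nth by auto. rewrite H6 by (apply F1; auto).
   apply sumR_ext. intros k Hk. unfold permute. rewrite vec_nth; auto. Qed.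

Lemma comb2_same N l v : length v = N -> comb2 N l v v = v.
Proof. intros H. apply list_ext. unfold comb2; rewrite vec_length; auto. intros t Ht. unfold comb2 in *.
 rewrite vec_length in Ht. rewrite vec_nth; auto. ring. Qed.

Lemma conv_comb_x x x' y l : conv n m S (x, y) -> conv n m S (x', y) -> 0 <= l <= 1 -> conv n m S (comb2 n l x x', y).
Proof. intros H1 H2 Hl. pose proof (conv_convex n m S _ _ l H1 H2 Hl) as H. unfold pcomb in H; simpl in H.
 rewrite comb2_same in H; auto. destruct H1 as [_ [L _]]; auto. Qed.

Lemma conv_comb_y x y y' l : conv n m S (x, y) -> conv n m S (x, y') -> 0 <= l <= 1 -> conv n m S (x, comb2 m l y y').
Proof. intros H1 H2 Hl. pose proof (conv_convex n m S _ _ l H1 H2 Hl) as H. unfold pcomb in H; simpl in H.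
 rewrite comb2_same in H; auto. destruct H1 as [L _]; auto. Qed.

Lemma part1_rev x y u v : conv n m T (u, v) -> majorizes v y -> majorizes u x -> conv n m S (x, y).
Proof. intros HT Hv Hu. assert (HS : conv n m S (u, v)) by (apply (conv_mono n m T); auto; apply inT_S).
 assert (HSx : conv n m S (x, v)).
 { apply (rado n (fun z => conv n m S (z, v))) with u; auto.
   - intros z f Hz F1 F2. apply conv_perm_x; auto.
   - intros z z' l H1 H2 Hl. apply conv_comb_x; auto.
   - intros z [Hz _]; auto. }
 apply (rado m (fun z => conv n m S (x, z))) with v; auto.
 - intros z f Hz F1 F2. apply conv_perm_y; auto.
 - intros z z' l H1 H2 Hl. apply conv_comb_y; auto.
 - intros z [_ [Hz _]]; auto. Qed.

Lemma conv_nonincr (A : pt -> Prop) p : (forall q, A q -> nonincr n (fst q) /\ nonincr m (snd q)) ->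
  conv n m A p -> nonincr n (fst p) /\ nonincr m (snd p).
Proof. intros HA [H1 [H2 [K [lam [px [py [H3 [H4 [H5 H6]]]]]]]]]. split; intros t Ht.
 - rewrite !H5 by lia. apply Rle_ge, sumR_le. intros k Hk. destruct (H3 k Hk) as [L A1]. apply HA in A1. simpl in A1.
   destruct A1 as [A1 _]. specialize (A1 t Ht). apply Rmult_le_compat_l; lra.
 - rewrite !H6 by lia. apply Rle_ge, sumR_le. intros k Hk. destruct (H3 k Hk) as [L A1]. apply HA in A1. simpl in A1.
   destruct A1 as [_ A1]. specialize (A1 t Ht). apply Rmult_le_compat_l; lra. Qed.

Lemma T_nonincr q : T q -> nonincr n (fst q) /\ nonincr m (snd q).
Proof. intros [[i [j [Hi [Hj [[[L1 [L2 [Hx Hy']]] Hp] [Hd [Hc' [Hy [Hb Ha]]]]]]]]]|[j [Hj [[[L1 [L2 [Hx Hy']]] Hp] [Hb [Ha Hy]]]]]];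
 split; auto; intros t Ht.
 - destruct (Nat.ltb_spec t j). rewrite (Hb t) by lia. assert (nth (t+1) (fst q) 0 <= b) by (apply Hx; lia). lra.
   rewrite (Ha (t+1)%nat) by lia. assert (a <= nth t (fst q) 0) by (apply Hx; lia). lra.
 - destruct (Nat.ltb_spec t j). rewrite (Hb t) by lia. assert (nth (t+1) (fst q) 0 <= b) by (apply Hx; lia). lra.
   rewrite (Ha (t+1)%nat) by lia. rewrite (Ha t) by lia. lra. Qed.

Definition Rset1 (p : pt) : Prop := length (fst p) = n /\ length (snd p) = m /\
  exists u v, majorizes v (snd p) /\ majorizes u (fst p) /\ conv n m T (u, v).

Lemma R1_convex : convex_set n m Rset1.
Proof. intros p q l [Lp1 [Lp2 [u [v [Mv [Mu Cp]]]]]] [Lq1 [Lq2 [u' [v' [Mv' [Mu' Cq]]]]]] Hl.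
 unfold pcomb; simpl. split. unfold comb2; apply vec_length. split. unfold comb2; apply vec_length.
 destruct (conv_nonincr T _ T_nonincr Cp) as [Su Sv]. destruct (conv_nonincr T _ T_nonincr Cq) as [Su' Sv'].
 simpl in *. pose proof Cp as Cp0. pose proof Cq as Cq0. destruct Cp0 as [Lu [Lv _]]. destruct Cq0 as [Lu' [Lv' _]]. simpl in *.
 exists (comb2 n l u u'), (comb2 m l v v'). split; [|split].
 - apply major_comb; auto.
 - apply major_comb; auto.
 - pose proof (conv_convex n m T (u, v) (u', v') l) as H. unfold pcomb in H; simpl in H. apply H; auto.
Qed.

End Prob.

Lemma prodR_app K1 K2 f : prodR (K1 + K2) f = prodR K1 f * prodR K2 (fun k => f (K1 + k)%nat).
Proof. induction K2; simpl. rewrite Nat.add_0_r; lra. rewrite Nat.add_succ_r. simpl. rewrite IHK2. lra. Qed.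

Lemma sumR_const K c : sumR K (fun _ => c) = INR K * c.
Proof. induction K; cbn [sumR]. simpl; ring. rewrite IHK, S_INR. ring. Qed.

Lemma prod_list_nth l : prod_list l = prodR (length l) (fun t => nth t l 0).
Proof. rewrite <- (map_id l) at 1. apply prod_list_map. Qed.

Lemma box_perm l l' lo hi : Permutation l l' -> (forall t, (t < length l)%nat -> lo <= nth t l 0 <= hi) ->
  forall t, (t < length l')%nat -> lo <= nth t l' 0 <= hi.
Proof. intros P H t Ht. assert (In (nth t l' 0) l) by (apply Permutation_in with l'; [apply Permutation_sym; auto| apply nth_In; auto]).
 apply In_nth with (d := 0) in H0. destruct H0 as [k [Hk E]]. rewrite <- E. auto. Qed.

Lemma istar_aux_spec a b s N : let i := istar_aux a b s N in
  (i <= N)%nat /\ ((1 <= i)%nat -> INR i * (b - a) < s) /\ ((i + 1 <= N)%nat -> s <= INR (i + 1) * (b - a)).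
Proof. induction N. simpl. split; [lia|split; intros; lia].
 cbv zeta. cbn [istar_aux]. destruct (Rlt_dec _ s) as [h|h].
 - split; [lia|split; [intros; auto|intros; lia]].
 - destruct IHN as [H1 [H2 H3]]. split; [lia|split; auto]. intros Hi.
   destruct (Nat.eq_dec (istar_aux a b s N + 1) (S N)) as [e|e]. rewrite e. apply Rnot_lt_le in h. lra. apply H3; lia. Qed.

Lemma Sfun_nth a x : Sfun a x = sumR (length x) (fun t => nth t x 0 - a).
Proof. unfold Sfun. apply sum_list_map. Qed.

Section Ustar.
Variables (n : nat) (a b : R).
Hypotheses (hn : (1 <= n)%nat) (ha : 0 <= a) (hab : a < b).

Lemma ustar_nth s t : (t < n)%nat -> nth t (ustar n a b s) 0 =
  if Nat.ltb t (istar n a b s) then b else if Nat.eqb t (istar n a b s) then a + s - (b - a) * INR (istar n a b s) else a.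
Proof. intros Ht. unfold ustar. change (map ?f (seq 0 n)) with (vec n f). rewrite vec_nth; auto. Qed.

Lemma ustar_len s : length (ustar n a b s) = n.
Proof. unfold ustar. rewrite length_map, length_seq; auto. Qed.

Lemma istar_spec s : 0 <= s <= INR n * (b - a) ->
  (istar n a b s < n)%nat /\ a <= a + s - (b - a) * INR (istar n a b s) <= b.
Proof. intros Hs. destruct (istar_aux_spec a b s n) as [H1 [H2 H3]]. fold (istar n a b s) in *.
 set (i := istar n a b s) in *. assert (Hi : (i < n)%nat).
 { destruct (Nat.eq_dec i n); [|lia]. exfalso. rewrite e in H2. specialize (H2 hn). lra. }
 split; auto. assert (Hi1 : s <= INR (i + 1) * (b - a)) by (apply H3; lia). rewrite plus_INR in Hi1. simpl in Hi1.
 clearbody i. destruct (Nat.eq_dec i 0). subst. simpl in *. lra. assert (INR i * (b - a) < s) by (apply H2; lia). lra. Qed.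

Lemma ustar_box s : 0 <= s <= INR n * (b - a) -> forall t, (t < n)%nat -> a <= nth t (ustar n a b s) 0 <= b.
Proof. intros Hs t Ht. rewrite ustar_nth by auto. destruct (istar_spec s Hs) as [_ H].
 destruct (Nat.ltb t _); [lra|]. destruct (Nat.eqb t _); lra. Qed.

Lemma ustar_nonincr s : 0 <= s <= INR n * (b - a) -> nonincr n (ustar n a b s).
Proof. intros Hs t Ht. rewrite !ustar_nth by lia. destruct (istar_spec s Hs) as [_ H]. set (i := istar n a b s) in *.
 destruct (Nat.ltb_spec t i); destruct (Nat.ltb_spec (t+1) i); destruct (Nat.eqb_spec t i); destruct (Nat.eqb_spec (t+1) i); try lia; lra. Qed.

Lemma ustar_Pj s : 0 <= s <= INR n * (b - a) -> forall j, (j <= n)%nat ->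
  Pj j (ustar n a b s) = if Nat.leb j (istar n a b s) then INR j * b else INR j * a + s.
Proof. intros Hs. destruct (istar_spec s Hs) as [Hi _]. set (i := istar n a b s) in *.
 induction j; intros Hj. unfold Pj; simpl. destruct (Nat.leb_spec 0 i); try lia. ring.
 rewrite Pj_S, IHj by lia. rewrite ustar_nth by lia. fold i. rewrite S_INR.
 destruct (Nat.leb_spec j i); destruct (Nat.leb_spec (S j) i); destruct (Nat.ltb_spec j i); destruct (Nat.eqb_spec j i); try lia.
 - ring.
 - subst. ring.
 - ring. Qed.

Lemma Sfun_bounds x : length x = n -> (forall t, (t < n)%nat -> a <= nth t x 0 <= b) -> 0 <= Sfun a x <= INR n * (b - a).
Proof. intros L H. rewrite Sfun_nth, L. split. apply sumR_nonneg; intros; pose proof (H k H0); lra.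
 rewrite <- sumR_const.
 apply sumR_le. intros k Hk. pose proof (H k Hk); lra. Qed.

Lemma Pj_sum_list l : Pj (length l) l = sum_list l.
Proof. unfold Pj; rewrite sum_list_nth; auto. Qed.

Lemma sum_list_Sfun x : sum_list x = INR (length x) * a + Sfun a x.
Proof. rewrite Sfun_nth, sum_list_nth. rewrite (sumR_ext _ (fun t => nth t x 0 - a) (fun t => nth t x 0 + (-a) * 1)) by (intros; ring).
 rewrite sumR_plus, sumR_scal, sumR_const1. ring. Qed.

Lemma Sfun_perm x x' : Permutation x x' -> Sfun a x = Sfun a x'.
Proof. intros P. unfold Sfun. apply sum_list_perm, Permutation_map; auto. Qed.

Lemma major_ustar x : length x = n -> (forall t, (t < n)%nat -> a <= nth t x 0 <= b) -> majorizes (ustar n a b (Sfun a x)) x.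
Proof. intros L H. set (s := Sfun a x). assert (Hs : 0 <= s <= INR n * (b - a)) by (apply Sfun_bounds; auto).
 apply (major_intro n). apply ustar_len. auto. apply ustar_nonincr; auto.
 - intros j Hj. set (xs := rsort x). assert (P := rsort_perm x). fold xs in P.
   assert (Lxs : length xs = n) by (rewrite <- (Permutation_length P); auto).
   destruct (Phi_attain j xs) as [th Hth]. apply sorted_nonincr, rsort_sorted. lia.
   exists th. rewrite (Phi_perm j x xs) by auto. rewrite Hth. rewrite ustar_Pj by (auto; lia).
   assert (Bx : forall t, (t < n)%nat -> a <= nth t xs 0 <= b) by (rewrite <- Lxs; apply (box_perm x); auto; rewrite L; auto).
   destruct (Nat.leb_spec j (istar n a b s)).
   + unfold Pj. rewrite <- sumR_const.
     apply sumR_le. intros k Hk. pose proof (Bx k ltac:(lia)). lra.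
   + assert (E : Pj j xs - INR j * a <= Sfun a xs).
     { rewrite Sfun_nth. unfold Pj. rewrite <- sumR_const.
       rewrite (sumR_ext j (fun k => nth k xs 0) (fun k => (nth k xs 0 - a) + a)) by (intros; ring).
       rewrite sumR_plus. assert (sumR j (fun k => nth k xs 0 - a) <= sumR (length xs) (fun k => nth k xs 0 - a)).
       { apply sumR_mono_K. intros k Hk. pose proof (Bx k ltac:(lia)). lra. lia. } lra. }
     rewrite <- (Sfun_perm x xs P) in E. fold s in E. lra.
 - rewrite <- (Pj_sum_list (ustar n a b s)). rewrite ustar_len. rewrite ustar_Pj by (auto; lia).
   destruct (istar_spec s Hs) as [Hi _]. destruct (Nat.leb_spec n (istar n a b s)); try lia.
   rewrite sum_list_Sfun, L. auto. Qed.

Lemma Sfun_ustar s : 0 <= s <= INR n * (b - a) -> Sfun a (ustar n a b s) = s.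
Proof. intros Hs. pose proof (sum_list_Sfun (ustar n a b s)). rewrite ustar_len in H.
 rewrite <- Pj_sum_list, ustar_len, ustar_Pj in H by (auto; lia). destruct (istar_spec s Hs) as [Hi _].
 destruct (Nat.leb_spec n (istar n a b s)); try lia. lra. Qed.

Definition Lf (i k : nat) (s : R) : R := b ^ i * a ^ k * (a + s - INR i * (b - a)).

Lemma prod_lower l : (forall t, (t < length l)%nat -> a <= nth t l 0 <= b) ->
  forall i k, (i + k + 1 = length l)%nat -> Lf i k (Sfun a l) <= prod_list l.
Proof. induction l as [|x0 rest IH]; intros Hb i k Hl. simpl in Hl; lia.
 assert (Hx0 : a <= x0 <= b) by (apply (Hb 0%nat); simpl; lia).
 assert (Hr : forall t, (t < length rest)%nat -> a <= nth t rest 0 <= b) by (intros t Ht; apply (Hb (S t)); simpl; lia).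
 simpl in Hl. unfold Lf. unfold Sfun. cbn [map]. unfold sum_list. cbn [fold_right]. fold (sum_list (map (fun t => t - a) rest)). fold (Sfun a rest).
 unfold prod_list. cbn [fold_right]. fold (prod_list rest).
 destruct rest as [|y0 rest'].
 - simpl in Hl. assert (i = 0%nat /\ k = 0%nat) as [-> ->] by lia. unfold Sfun, prod_list; simpl. lra.
 - set (rest := y0 :: rest') in *. set (S' := Sfun a rest). set (Q := prod_list rest).
   assert (HS' : 0 <= S' <= INR (length rest) * (b - a)).
   { unfold S'. rewrite Sfun_nth. split. apply sumR_nonneg; intros; pose proof (Hr k0 H); lra.
     rewrite <- sumR_const.
     apply sumR_le. intros k0 Hk. pose proof (Hr k0 Hk); lra. }
   assert (HQ : 0 <= Q). { unfold Q. rewrite prod_list_nth. apply prodR_nonneg. intros. pose proof (Hr k0 H); lra. }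
   assert (Lr : (length rest >= 1)%nat) by (unfold rest; simpl; lia).
   assert (Hbi : forall e, 0 <= b ^ e) by (intros; apply pow_le; lra).
   assert (Hai : forall e, 0 <= a ^ e) by (intros; apply pow_le; lra).
   destruct (classic ((1 <= k)%nat /\ INR i * (b - a) <= S')) as [[Hk HS]|Hn].
   + assert (IH1 := IH Hr i (k - 1)%nat ltac:(lia)). unfold Lf in IH1. fold S' Q in IH1.
     replace k with (S (k - 1)) by lia. simpl pow.
     set (P := b ^ i * a ^ (k - 1)). assert (HP : 0 <= P) by (unfold P; apply Rmult_le_pos; auto).
     assert (x0 * (b ^ i * a ^ (k - 1) * (a + S' - INR i * (b - a))) <= x0 * Q) by (apply Rmult_le_compat_l; lra).
     fold P in H. assert (0 <= P * ((x0 - a) * (S' - INR i * (b - a)))) by (apply Rmult_le_pos; auto; apply Rmult_le_pos; lra).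
     replace (b ^ i * (a * a ^ (k - 1))) with (a * P) by (unfold P; ring). nra.
   + assert (Hi : (1 <= i)%nat /\ S' <= INR i * (b - a)).
     { destruct (Nat.eq_dec k 0). subst k. split. lia. replace i with (length rest) by lia. lra.
       assert (S' < INR i * (b - a)) by (apply Rnot_le_lt; intros Hc; apply Hn; split; [lia|auto]).
       split; [|lra]. destruct i; [simpl in H; lra| lia]. }
     destruct Hi as [Hi HS]. destruct i as [|i']; [lia|].
     assert (IH1 := IH Hr i' k ltac:(lia)). unfold Lf in IH1. fold S' Q in IH1.
     simpl pow. rewrite S_INR in *.
     set (P := b ^ i' * a ^ k). assert (HP : 0 <= P) by (unfold P; apply Rmult_le_pos; auto).
     assert (x0 * (b ^ i' * a ^ k * (a + S' - INR i' * (b - a))) <= x0 * Q) by (apply Rmult_le_compat_l; lra).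
     fold P in H. assert (0 <= P * ((b - x0) * ((INR i' + 1) * (b - a) - S'))).
     { apply Rmult_le_pos; auto; apply Rmult_le_pos; lra. }
     replace (b * b ^ i' * a ^ k) with (b * P) by (unfold P; ring). nra.
Qed.

Lemma prod_ustar s : 0 <= s <= INR n * (b - a) ->
  prod_list (ustar n a b s) = Lf (istar n a b s) (n - istar n a b s - 1) s.
Proof. intros Hs. destruct (istar_spec s Hs) as [Hi _]. set (i := istar n a b s) in *.
 rewrite prod_list_nth, ustar_len. replace n with (i + (1 + (n - i - 1)))%nat at 1 by lia.
 rewrite prodR_app, prodR_shift.
 rewrite (prodR_ext i _ (fun _ => b)). rewrite (prodR_ext (n - i - 1) _ (fun _ => a)). rewrite !prodR_const.
 rewrite Nat.add_0_r, ustar_nth by lia. fold i. rewrite Nat.ltb_irrefl, Nat.eqb_refl. unfold Lf. ring.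
 intros k Hk. rewrite ustar_nth by lia. fold i. destruct (Nat.ltb_spec (i + S k) i); destruct (Nat.eqb_spec (i + S k) i); try lia; auto.
 intros k Hk. rewrite ustar_nth by lia. fold i. destruct (Nat.ltb_spec k i); try lia; auto.
Qed.

Lemma prod_ustar_le x : length x = n -> (forall t, (t < n)%nat -> a <= nth t x 0 <= b) ->
  prod_list (ustar n a b (Sfun a x)) <= prod_list x.
Proof. intros L H. assert (Hs := Sfun_bounds x L H). rewrite prod_ustar by auto.
 destruct (istar_spec _ Hs) as [Hi _]. apply prod_lower. rewrite L; auto. lia. Qed.

Lemma Lf_le_ustar s i : 0 <= s <= INR n * (b - a) -> (i < n)%nat -> Lf i (n - i - 1) s <= prod_list (ustar n a b s).
Proof. intros Hs Hi. rewrite <- (Sfun_ustar s Hs) at 1. apply prod_lower. rewrite ustar_len. apply ustar_box; auto.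
 rewrite ustar_len. lia. Qed.

End Ustar.

Section Red.
Variables (n m : nat) (a b c d alpha beta : R).
Hypotheses (hn : (1 <= n)%nat) (hm : (1 <= m)%nat) (ha : 0 <= a) (hab : a < b) (hc : 0 <= c) (hcd : c < d)
  (halpha : 0 < alpha) (hbeta : 0 < beta).

Notation S := (inS n m a b c d alpha beta).
Notation T := (inT n m a b c d alpha beta).
Notation k := (kdef m alpha beta).

Lemma kdef_le : (k <= m)%nat.
Proof. unfold kdef; lia. Qed.

Lemma kdef_bound r : (k + 1 <= r)%nat -> (r <= m)%nat -> INR r * alpha > beta.
Proof. intros H1 H2. unfold kdef in *. set (q := beta / alpha) in *.
 assert (Hq : 0 < q) by (unfold q; apply Rdiv_lt_0_compat; auto).
 destruct (base_Int_part q) as [B1 B2].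
 assert (HI : (0 <= Int_part q)%Z). { assert (HH : IZR (-1) < IZR (Int_part q)) by (simpl; lra). apply lt_IZR in HH. lia. }
 assert (Hk : k = Z.to_nat (Int_part q)) by (unfold kdef; fold q; lia).
 assert (INR r >= IZR (Int_part q) + 1).
 { rewrite <- (Z2Nat.id _ HI). rewrite <- INR_IZR_INZ. rewrite <- S_INR. apply Rle_ge, le_INR. unfold kdef in Hk. fold q in Hk. lia. }
 assert (INR r > q) by lra. unfold q in H0. apply Rmult_gt_compat_r with (r := alpha) in H0; auto.
 unfold Rdiv in H0. rewrite Rmult_assoc, Rinv_l in H0; lra. Qed.

Definition block (y : list R) (i e : nat) : Prop :=
  (i <= e <= m)%nat /\ (forall t, (t < i)%nat -> nth t y 0 = d) /\ (forall t, (e <= t < m)%nat -> nth t y 0 = c) /\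
  (forall t, (i <= t < e)%nat -> c < nth t y 0 < d).

Lemma block_exists y : nonincr m y -> (forall t, (t < m)%nat -> c <= nth t y 0 <= d) -> exists i e, block y i e.
Proof. intros Sy By.
 assert (Hi : exists i, (i <= m)%nat /\ (forall t, (t < i)%nat -> nth t y 0 = d) /\ ((i < m)%nat -> nth i y 0 < d)).
 { destruct (classic (exists t, (t < m)%nat /\ nth t y 0 < d)) as [[t0 H0]|Hn].
   - destruct (ex_first (fun t => (t < m)%nat /\ nth t y 0 < d) t0 H0) as [i [[Hi1 Hi2] [Hi3 Hi4]]].
     exists i. split; [lia|split; auto]. intros t Ht. destruct (By t ltac:(lia)) as [Q1 Q2].
     destruct (Rle_lt_or_eq_dec _ _ Q2); auto. exfalso; apply (Hi4 t Ht); split; auto; lia.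
   - exists m. split; [lia|split; [|lia]]. intros t Ht. destruct (By t Ht) as [Q1 Q2].
     destruct (Rle_lt_or_eq_dec _ _ Q2); auto. exfalso; apply Hn; eauto. }
 destruct Hi as [i [Hi1 [Hi2 Hi3]]].
 destruct (classic (exists t, (i <= t < m)%nat /\ nth t y 0 <= c)) as [[t0 H0]|Hn].
 - destruct (ex_first (fun t => (i <= t < m)%nat /\ nth t y 0 <= c) t0 H0) as [e [[He1 He2] [He3 He4]]].
   exists i, e. split; [lia|split; [auto|split]].
   + intros t Ht. assert (nth e y 0 >= nth t y 0) by (apply (nonincr_mono m); auto; lia). pose proof (By t ltac:(lia)). lra.
   + intros t Ht. split. apply Rnot_le_lt. intros Hc. apply (He4 t ltac:(lia)). split; auto; lia.
     assert (nth i y 0 >= nth t y 0) by (apply (nonincr_mono m); auto; lia). specialize (Hi3 ltac:(lia)). lra.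
 - exists i, m. split; [lia|split; [auto|split]]. intros; lia.
   intros t Ht. split. apply Rnot_le_lt. intros Hc. apply Hn. exists t; split; auto.
   assert (nth i y 0 >= nth t y 0) by (apply (nonincr_mono m); auto; lia). specialize (Hi3 ltac:(lia)). lra.
Qed.

Lemma block_shrink y' i e h : (forall t, (t < i)%nat -> nth t y' 0 = d) -> (forall t, (e <= t < m)%nat -> nth t y' 0 = c) ->
  (i <= h < e)%nat -> (nth h y' 0 = c \/ nth h y' 0 = d) -> (e <= m)%nat ->
  forall i' e', block y' i' e' -> (e' - i' < e - i)%nat.
Proof. intros Hd Hc Hh Hcd Hem i' e' [B1 [B2 [B3 B4]]].
 destruct (Nat.eq_dec i' e'). lia.
 assert (i <= i')%nat. { destruct (Nat.le_gt_cases i i'); auto. exfalso. specialize (B4 i' ltac:(lia)). rewrite Hd in B4 by lia. lra. }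
 assert (e' <= e)%nat. { destruct (Nat.le_gt_cases e' e); auto. exfalso. specialize (B4 (e' - 1)%nat ltac:(lia)). rewrite Hc in B4 by lia. lra. }
 assert (~ (i' <= h < e')%nat). { intros Hc'. specialize (B4 h Hc'). destruct Hcd; lra. }
 lia. Qed.

Definition xform (j : nat) (x : list R) : Prop :=
  length x = n /\ (j < n)%nat /\ (forall s, (s < n)%nat -> (s < j)%nat -> nth s x 0 = b) /\
  (forall s, (s < n)%nat -> (j < s)%nat -> nth s x 0 = a) /\ a <= nth j x 0 <= b.

Lemma T_edge j x y : xform j x -> S (x, y) -> nonincr m y -> (nth j x 0 = a \/ nth j x 0 = b) -> T (x, y).
Proof. intros [L [Hj [Hb [Ha Hx]]]] HS Hy [E|E]; right.
 - exists j. split; [lia|]. split; auto. simpl. split; [|split; auto]. intros s Hs Hsj; auto.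
   intros s Hs Hsj. destruct (Nat.eq_dec s j). subst; auto. apply Ha; auto; lia.
 - exists (j + 1)%nat. split; [lia|]. split; auto. simpl. split; [|split; auto].
   intros s Hs Hsj. destruct (Nat.eq_dec s j). subst; auto. apply Hb; auto; lia.
   intros s Hs Hsj. apply Ha; auto; lia. Qed.

Lemma T_small j x y i e : xform j x -> S (x, y) -> nonincr m y -> block y i e -> (e - i <= k)%nat -> T (x, y).
Proof. intros [L [Hj [Hb [Ha Hx]]]] HS Hy [B1 [B2 [B3 B4]]] Hk. left. pose proof kdef_le.
 exists (Nat.min i (m - k)), j. split; [lia|split; [lia|]]. split; auto. simpl. split; [|split; [|split; [auto|split]]].
 - intros t Ht Hti. apply B2. lia.
 - intros t Ht Hti. apply B3. lia.
 - intros s Hs Hsj; auto.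
 - intros s Hs Hsj; apply Ha; auto; lia. Qed.

End Red.

Definition scale (N : nat) (l : list R) (i e : nat) (q : R) : list R :=
  vec N (fun t => if andb (Nat.leb i t) (Nat.ltb t e) then nth t l 0 * q else nth t l 0).

Lemma scale_nth N l i e q t : (t < N)%nat -> nth t (scale N l i e q) 0 =
  if andb (Nat.leb i t) (Nat.ltb t e) then nth t l 0 * q else nth t l 0.
Proof. intros; unfold scale; rewrite vec_nth; auto. Qed.

Lemma scale_len N l i e q : length (scale N l i e q) = N.
Proof. unfold scale; apply vec_length. Qed.

Lemma scale_in N l i e q t : (t < N)%nat -> (i <= t < e)%nat -> nth t (scale N l i e q) 0 = nth t l 0 * q.
Proof. intros H1 H2. rewrite scale_nth; auto. destruct (Nat.leb_spec i t); destruct (Nat.ltb_spec t e); simpl; auto; lia. Qed.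

Lemma scale_out N l i e q t : (t < N)%nat -> ~ (i <= t < e)%nat -> nth t (scale N l i e q) 0 = nth t l 0.
Proof. intros H1 H2. rewrite scale_nth; auto. destruct (Nat.leb_spec i t); destruct (Nat.ltb_spec t e); simpl; auto; lia. Qed.

Lemma scale_comb N l i e q1 q2 lam : length l = N -> lam * q1 + (1 - lam) * q2 = 1 ->
  comb2 N lam (scale N l i e q1) (scale N l i e q2) = l.
Proof. intros L H. apply list_ext. unfold comb2; rewrite vec_length; auto. intros t Ht. unfold comb2 in Ht; rewrite vec_length in Ht.
 unfold comb2. rewrite vec_nth by auto. rewrite !scale_nth by auto. destruct (andb _ _).
 replace (lam * (nth t l 0 * q1) + (1 - lam) * (nth t l 0 * q2)) with (nth t l 0 * (lam * q1 + (1 - lam) * q2)) by ring.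
 rewrite H; ring. ring. Qed.

Lemma prod_scale N l i e q f : length l = N -> (forall t, (t < N)%nat -> 0 <= nth t l 0) -> 0 <= q -> (i <= e <= N)%nat ->
  prod_list (map (fun t => rpow t f) (scale N l i e q)) = prod_list (map (fun t => rpow t f) l) * (rpow q f) ^ (e - i).
Proof. intros L Hl Hq Hie. rewrite !prod_list_map. rewrite scale_len, L.
 rewrite (prodR_ext N _ (fun t => rpow (nth t l 0) f * (if andb (Nat.leb i t) (Nat.ltb t e) then rpow q f else 1))).
 rewrite prodR_mult, prodR_block. f_equal. f_equal. lia.
 intros t Ht. rewrite scale_nth by auto. destruct (andb _ _). apply rpow_mult; auto. ring. Qed.

Section Red2.
Variables (n m : nat) (a b c d alpha beta : R).
Hypotheses (hn : (1 <= n)%nat) (hm : (1 <= m)%nat) (ha : 0 <= a) (hab : a < b) (hc : 0 <= c) (hcd : c < d)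
  (halpha : 0 < alpha) (hbeta : 0 < beta).

Notation S := (inS n m a b c d alpha beta).
Notation T := (inT n m a b c d alpha beta).
Notation k := (kdef m alpha beta).

Lemma endpoint j x y i e z p :
  xform n a b j x -> S (x, y) -> nonincr m y -> block m c d y i e ->
  -1 < z -> 0 <= 1 + p * z -> a <= nth j x 0 * (1 + p * z) <= b ->
  (forall t, (i <= t < e)%nat -> c <= nth t y 0 * (1 + z) <= d) ->
  1 <= p -> p * beta = INR (e - i) * alpha ->
  xform n a b j (scale n x j (j + 1) (1 + p * z)) /\ S (scale n x j (j + 1) (1 + p * z), scale m y i e (1 + z)) /\
  nonincr m (scale m y i e (1 + z)).
Proof. intros [L [Hj [Hb [Ha Hx]]]] [[L1 [L2 [Bx By]]] HP] Sy [B1 [B2 [B3 B4]]] Hz Hpz Hxj Hyt Hp Hpb.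
 simpl in L1, L2, Bx, By, HP.
 assert (Hxe : forall s, (s < n)%nat -> s <> j -> nth s (scale n x j (j + 1) (1 + p * z)) 0 = nth s x 0).
 { intros s Hs Hsj. apply scale_out; auto. lia. }
 assert (Hxj' : nth j (scale n x j (j + 1) (1 + p * z)) 0 = nth j x 0 * (1 + p * z)) by (apply scale_in; lia).
 split; [|split].
 - split. apply scale_len. split; auto. split; [|split].
   + intros s Hs Hsj. rewrite Hxe by lia. auto.
   + intros s Hs Hsj. rewrite Hxe by lia. auto.
   + rewrite Hxj'. auto.
 - split. split; simpl. apply scale_len. split. apply scale_len. split.
   + intros s Hs. destruct (Nat.eq_dec s j). subst. rewrite Hxj'; auto. rewrite Hxe; auto.
   + intros t Ht. destruct (le_lt_dec i t); destruct (le_lt_dec e t).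
     * rewrite scale_out by lia. auto.
     * rewrite scale_in by lia. auto.
     * lia.
     * rewrite scale_out by lia. auto.
   + simpl. assert (Hx0 : forall t, (t < n)%nat -> 0 <= nth t x 0) by (intros t Ht; pose proof (Bx t Ht); lra).
     assert (Hy0 : forall t, (t < m)%nat -> 0 <= nth t y 0) by (intros t Ht; pose proof (By t Ht); lra).
     rewrite (prod_scale n x j (j + 1) (1 + p * z) beta L1 Hx0 Hpz ltac:(lia)).
     rewrite (prod_scale m y i e (1 + z) alpha L2 Hy0 ltac:(lra) ltac:(lia)).
     replace (j + 1 - j)%nat with 1%nat by lia. rewrite pow_1.
     rewrite rpow_pow_nat by lra.
     assert (W : rpow (1 + p * z) beta <= rpow (1 + z) (INR (e - i) * alpha)).
     { rewrite <- Hpb, <- (rpow_rpow (1 + z) p beta) by lra. apply rpow_le. lra. split; [lra|]. apply bernoulli; lra. }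
     pose proof (rpow_nonneg (1 + p * z) beta).
     pose proof (rpow_nonneg (1 + z) (INR (e - i) * alpha)).
     assert (0 <= prod_list (map (fun t => rpow t beta) x)).
     { rewrite prod_list_map. apply prodR_nonneg. intros; apply rpow_nonneg. }
     apply Rle_ge. apply Rmult_le_compat; auto. lra.
 - intros t Ht. pose proof (Sy t Ht).
   destruct (le_lt_dec i t); destruct (le_lt_dec e t); destruct (le_lt_dec i (t+1)); destruct (le_lt_dec e (t+1)); try lia.
   all: first
   [ rewrite (scale_out m y i e (1 + z) t), (scale_out m y i e (1 + z) (t+1)) by lia; auto
   | rewrite (scale_out m y i e (1 + z) (t+1)), (scale_in m y i e (1 + z) t) by lia; rewrite (B3 (t+1)%nat) by lia; pose proof (Hyt t ltac:(lia)); lra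
   | rewrite (scale_in m y i e (1 + z) (t+1)), (scale_in m y i e (1 + z) t) by lia; apply Rle_ge; apply Rmult_le_compat_r; lra
   | rewrite (scale_in m y i e (1 + z) (t+1)), (scale_out m y i e (1 + z) t) by lia; rewrite (B2 t) by lia; pose proof (Hyt (t+1)%nat ltac:(lia)); lra ].
Qed.

Lemma reduce_split j x y i e :
  xform n a b j x -> a < nth j x 0 < b -> S (x, y) -> nonincr m y -> block m c d y i e -> (k + 1 <= e - i)%nat ->
  (forall x' y', xform n a b j x' -> S (x', y') -> nonincr m y' ->
     (forall i' e', block m c d y' i' e' -> (e' - i' < e - i)%nat) -> conv n m T (x', y')) ->
  conv n m T (x, y).
Proof. intros Xf Ht0 HS Sy Bl Hk IH.
 pose proof Xf as [L [Hj [Hb [Ha Hx]]]]. pose proof HS as [[L1 [L2 [Bx By]]] HP]. simpl in L1, L2, Bx, By, HP.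
 pose proof Bl as [B1 [B2 [B3 B4]]].
 set (t0 := nth j x 0) in *. set (yi := nth i y 0). set (ye := nth (e - 1) y 0).
 assert (Hyi : c < yi < d) by (apply B4; lia). assert (Hye : c < ye < d) by (apply B4; lia).
 assert (Hyr : forall t, (i <= t < e)%nat -> ye <= nth t y 0 <= yi).
 { intros t Ht. split; apply Rge_le; apply (nonincr_mono m); auto; lia. }
 set (r := (e - i)%nat) in *.
 assert (Hr : INR r * alpha > beta) by (apply (kdef_bound n m alpha beta hn hm halpha hbeta); lia).
 set (p := INR r * alpha / beta).
 assert (Hp : p > 1). { unfold p. apply Rmult_gt_reg_r with beta; auto. unfold Rdiv. rewrite Rmult_assoc, Rinv_l by lra. lra. }
 assert (Hpb : p * beta = INR r * alpha) by (unfold p; field; lra).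
 set (A1 := d / yi - 1). set (C1 := (b / t0 - 1) / p). set (zp := Rmin A1 C1).
 set (A2 := c / ye - 1). set (C2 := (a / t0 - 1) / p). set (zm := Rmax A2 C2).
 assert (HA1 : yi * (1 + A1) = d) by (unfold A1; field; lra).
 assert (HC1 : t0 * (1 + p * C1) = b) by (unfold C1; field; lra).
 assert (HA2 : ye * (1 + A2) = c) by (unfold A2; field; lra).
 assert (HC2 : t0 * (1 + p * C2) = a) by (unfold C2; field; lra).
 assert (PA1 : 0 < A1). { unfold A1. assert (d / yi > 1). { apply Rmult_gt_reg_r with yi; [lra|]. unfold Rdiv. rewrite Rmult_assoc, Rinv_l by lra. lra. } lra. }
 assert (PC1 : 0 < C1). { unfold C1. apply Rdiv_lt_0_compat; [|lra]. assert (b / t0 > 1). { apply Rmult_gt_reg_r with t0; [lra|]. unfold Rdiv. rewrite Rmult_assoc, Rinv_l by lra. lra. } lra. }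
 assert (NA2 : A2 < 0). { unfold A2. assert (c / ye < 1). { apply Rmult_lt_reg_r with ye; [lra|]. unfold Rdiv. rewrite Rmult_assoc, Rinv_l by lra. lra. } lra. }
 assert (NC2 : C2 < 0). { unfold C2. assert (a / t0 < 1). { apply Rmult_lt_reg_r with t0; [lra|]. unfold Rdiv. rewrite Rmult_assoc, Rinv_l by lra. lra. }
   unfold Rdiv at 1. apply Rmult_neg_pos; [lra|]. apply Rinv_0_lt_compat; lra. }
 assert (GC2 : 0 <= 1 + p * C2). { assert (0 <= t0 * (1 + p * C2)) by lra. apply Rmult_le_reg_l with t0; lra. }
 assert (Hzp : 0 < zp) by (unfold zp; apply Rmin_glb_lt; auto).
 assert (Hzm : zm < 0) by (unfold zm; apply Rmax_lub_lt; auto).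
 assert (Hzm2 : C2 <= zm) by apply Rmax_r. assert (Hzm1 : A2 <= zm) by apply Rmax_l.
 assert (Hzp1 : zp <= A1) by apply Rmin_l. assert (Hzp2 : zp <= C1) by apply Rmin_r.
 assert (Hzm3 : -1 < zm). { assert (-1 < C2). { destruct (Rle_dec C2 (-1)) as [h|h]; [|lra]. exfalso. assert (p * C2 <= p * (-1)) by (apply Rmult_le_compat_l; lra). lra. } lra. }
 set (X := fun z => scale n x j (j + 1) (1 + p * z)). set (Y := fun z => scale m y i e (1 + z)).
 assert (EP : forall z, zm <= z <= zp ->
   (nth i (Y z) 0 = d \/ nth (e - 1) (Y z) 0 = c \/ nth j (X z) 0 = b \/ nth j (X z) 0 = a) -> conv n m T (X z, Y z)).
 { intros z Hz Hhit.
   assert (Hpz : 0 <= 1 + p * z) by nra.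
   assert (Hxj : a <= t0 * (1 + p * z) <= b) by nra.
   assert (Hyt : forall t, (i <= t < e)%nat -> c <= nth t y 0 * (1 + z) <= d).
   { intros t Ht. pose proof (Hyr t Ht). assert (0 < 1 + z) by lra. split; nra. }
   destruct (endpoint j x y i e z p Xf HS Sy Bl ltac:(lra) Hpz Hxj Hyt ltac:(lra) Hpb) as [E1 [E2 E3]].
   fold (X z) (Y z) in E1, E2, E3.
   assert (Yd : forall t, (t < i)%nat -> nth t (Y z) 0 = d) by (intros t Ht; unfold Y; rewrite scale_out by lia; apply B2; lia).
   assert (Yc : forall t, (e <= t < m)%nat -> nth t (Y z) 0 = c) by (intros t Ht; unfold Y; rewrite scale_out by lia; apply B3; lia).
   destruct Hhit as [H|[H|[H|H]]].
   - apply IH; auto. intros i' e' Bl'. apply (block_shrink n m c d hn hm (Y z) i e i Yd Yc); auto. lia. lia.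
   - apply IH; auto. intros i' e' Bl'. apply (block_shrink n m c d hn hm (Y z) i e (e - 1) Yd Yc); auto. lia. lia.
   - destruct (inS_len _ _ _ _ _ _ _ _ _ E2). apply conv_incl; auto. apply (T_edge n m a b c d alpha beta hn hm ha hab j); auto.
   - destruct (inS_len _ _ _ _ _ _ _ _ _ E2). apply conv_incl; auto. apply (T_edge n m a b c d alpha beta hn hm ha hab j); auto. }
 assert (XN : forall z, nth j (X z) 0 = t0 * (1 + p * z)) by (intros; unfold X; rewrite scale_in by lia; auto).
 assert (YNi : forall z, nth i (Y z) 0 = yi * (1 + z)) by (intros; unfold Y; rewrite scale_in by lia; auto).
 assert (YNe : forall z, nth (e - 1) (Y z) 0 = ye * (1 + z)) by (intros; unfold Y; rewrite scale_in by lia; auto).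
 assert (Cp : conv n m T (X zp, Y zp)).
 { apply EP. lra. rewrite XN, YNi. unfold zp. destruct (Rle_dec A1 C1).
   - rewrite Rmin_left by auto. left; auto.
   - rewrite Rmin_right by lra. right; right; left; auto. }
 assert (Cm : conv n m T (X zm, Y zm)).
 { apply EP. lra. rewrite XN, YNe. unfold zm. destruct (Rle_dec C2 A2).
   - rewrite Rmax_left by lra. right; left; auto.
   - rewrite Rmax_right by lra. right; right; right; auto. }
 set (lam := - zm / (zp - zm)).
 assert (Hlam : 0 <= lam <= 1). { unfold lam. split. unfold Rdiv; apply Rmult_le_pos; [lra|left; apply Rinv_0_lt_compat; lra].
   apply Rmult_le_reg_r with (zp - zm); [lra|]. unfold Rdiv. rewrite Rmult_assoc, Rinv_l by lra. lra. }
 assert (Hl0 : lam * zp + (1 - lam) * zm = 0) by (unfold lam; field; lra).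
 pose proof (conv_convex n m T _ _ lam Cp Cm Hlam) as HH. unfold pcomb in HH. simpl in HH.
 unfold X, Y in HH. rewrite !scale_comb in HH; auto; nra.
Qed.

End Red2.

Lemma prod_list_rpow l e : (forall t, (t < length l)%nat -> 0 <= nth t l 0) ->
  prod_list (map (fun t => rpow t e) l) = rpow (prod_list l) e.
Proof. intros H. rewrite prod_list_map, prod_list_nth. apply prodR_rpow. auto. Qed.

Section Part1.
Variables (n m : nat) (a b c d alpha beta : R).
Hypotheses (hn : (1 <= n)%nat) (hm : (1 <= m)%nat) (ha : 0 <= a) (hab : a < b) (hc : 0 <= c) (hcd : c < d)
  (halpha : 0 < alpha) (hbeta : 0 < beta).

Notation S := (inS n m a b c d alpha beta).
Notation T := (inT n m a b c d alpha beta).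
Notation k := (kdef m alpha beta).

Lemma reduce N : forall j x y, xform n a b j x -> S (x, y) -> nonincr m y ->
  (forall i e, block m c d y i e -> (e - i <= N)%nat) -> conv n m T (x, y).
Proof. induction N; intros j x y Xf HS Sy HB;
 pose proof HS as [[L1 [L2 [Bx By]]] HP]; simpl in L1, L2, Bx, By, HP;
 destruct (block_exists n m c d hn hm y Sy By) as [i [e Bl]];
 pose proof Xf as [_ [Hj [_ [_ Hx]]]];
 (destruct (Rle_lt_or_eq_dec _ _ (proj1 Hx)) as [h1|h1]; [|apply conv_incl; auto; apply (T_edge n m a b c d alpha beta hn hm ha hab j); auto]);
 (destruct (Rle_lt_or_eq_dec _ _ (proj2 Hx)) as [h2|h2]; [|apply conv_incl; auto; apply (T_edge n m a b c d alpha beta hn hm ha hab j); auto]);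
 (destruct (le_lt_dec (e - i) k) as [hk|hk]; [apply conv_incl; auto; apply (T_small n m a b c d alpha beta hn hm j x y i e); auto|]).
 - specialize (HB i e Bl). lia.
 - apply (reduce_split n m a b c d alpha beta hn hm ha hab hc halpha hbeta j x y i e); auto. lia.
   intros x' y' Xf' HS' Sy' HB'. apply (IHN j); auto. intros i' e' Bl'. specialize (HB' i' e' Bl'). specialize (HB i e Bl). lia.
Qed.

Lemma S_R1 p : S p -> Rset1 n m a b c d alpha beta p.
Proof. destruct p as [x y]. intros HS. pose proof HS as [[L1 [L2 [Bx By]]] HP]; simpl in L1, L2, Bx, By, HP.
 set (s := Sfun a x). assert (Hs : 0 <= s <= INR n * (b - a)) by (apply Sfun_bounds; auto).
 set (u := ustar n a b s). set (v := rsort y).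
 assert (Pv := rsort_perm y). fold v in Pv.
 assert (Lv : length v = m) by (rewrite <- (Permutation_length Pv); auto).
 assert (Bv : forall t, (t < m)%nat -> c <= nth t v 0 <= d) by (rewrite <- Lv; apply (box_perm y); auto; rewrite L2; auto).
 split; auto. split; auto. exists u, v. split; [apply major_rsort|split; [apply major_ustar; auto|]].
 destruct (istar_spec n a b hn s Hs) as [Hi Hmid].
 assert (Xf : xform n a b (istar n a b s) u).
 { split. apply ustar_len. split; auto. split; [|split].
   - intros t Ht Htj. unfold u; rewrite ustar_nth by auto. destruct (Nat.ltb_spec t (istar n a b s)); auto; lia.
   - intros t Ht Htj. unfold u; rewrite ustar_nth by auto. destruct (Nat.ltb_spec t (istar n a b s)); try lia.
     destruct (Nat.eqb_spec t (istar n a b s)); auto; lia.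
   - unfold u; rewrite ustar_nth by auto. rewrite Nat.ltb_irrefl, Nat.eqb_refl. auto. }
 assert (Su : S (u, v)).
 { split. split; simpl. apply ustar_len. split; auto. split; auto. apply ustar_box; auto.
   simpl. rewrite <- (prod_list_perm (map (fun t => rpow t alpha) y) (map (fun t => rpow t alpha) v)) by (apply Permutation_map; auto).
   assert (prod_list (map (fun t => rpow t beta) u) <= prod_list (map (fun t => rpow t beta) x)).
   { rewrite !prod_list_rpow. apply rpow_le. lra. split. rewrite prod_list_nth. apply prodR_nonneg. intros t Ht.
     unfold u in *. rewrite ustar_len in Ht. pose proof (ustar_box n a b hn hab s Hs t Ht). lra.
     apply prod_ustar_le; auto.
     intros t Ht. rewrite L1 in Ht. pose proof (Bx t Ht); lra.
     intros t Ht. unfold u in *. rewrite ustar_len in Ht. pose proof (ustar_box n a b hn hab s Hs t Ht). lra. }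
   lra. }
 apply (reduce (m + 1) (istar n a b s)); auto. rewrite <- Lv. apply sorted_nonincr, rsort_sorted.
 intros i e [B1 _]. lia.
Qed.

Lemma part1_fwd p : conv n m S p -> Rset1 n m a b c d alpha beta p.
Proof. apply conv_sub. intros q Hq; apply (inS_len _ _ _ _ _ _ _ _ _ Hq). apply S_R1. apply R1_convex; auto. Qed.

End Part1.

Section Part2.
Variables (n m : nat) (a b c d alpha beta : R).
Hypotheses (hn : (1 <= n)%nat) (hm : (1 <= m)%nat) (ha : 0 <= a) (hab : a < b) (hc : 0 <= c) (hcd : c < d)
  (halpha : 0 < alpha) (hbeta : 0 < beta).
Hypothesis hmab : INR m * alpha <= beta.

Notation S := (inS n m a b c d alpha beta).
Notation g := (beta / (INR m * alpha)).

Definition Gset (p : pt) : Prop := inH n m a b c d p /\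
  prod_list (map (fun t => rpow t (1 / INR m)) (snd p)) >=
  prod_list (map (fun t => rpow t g) (ustar n a b (Sfun a (fst p)))).

Lemma mpos : 0 < INR m.
Proof. apply lt_0_INR; lia. Qed.

Lemma g_ge1 : 1 <= g.
Proof. pose proof mpos. assert (0 < INR m * alpha) by (apply Rmult_lt_0_compat; auto).
 apply Rmult_le_reg_r with (INR m * alpha); auto. unfold Rdiv. rewrite Rmult_assoc, Rinv_l by lra. lra. Qed.

Lemma ustar_nonneg s : 0 <= s <= INR n * (b - a) -> forall t, (t < length (ustar n a b s))%nat -> 0 <= nth t (ustar n a b s) 0.
Proof. intros Hs t Ht. rewrite ustar_len in Ht. pose proof (ustar_box n a b hn hab s Hs t Ht). lra. Qed.

Lemma P_nonneg s : 0 <= s <= INR n * (b - a) -> 0 <= prod_list (ustar n a b s).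
Proof. intros Hs. rewrite prod_list_nth. apply prodR_nonneg. intros; apply ustar_nonneg; auto. Qed.

Lemma S_G p : S p -> Gset p.
Proof. destruct p as [x y]. intros HS. pose proof HS as [[L1 [L2 [Bx By]]] HP]; simpl in L1, L2, Bx, By, HP.
 split; [apply HS|]. simpl. set (s := Sfun a x). assert (Hs : 0 <= s <= INR n * (b - a)) by (apply Sfun_bounds; auto).
 pose proof mpos. assert (Hma : 0 < INR m * alpha) by (apply Rmult_lt_0_compat; auto).
 assert (Hx0 : forall t, (t < length x)%nat -> 0 <= nth t x 0) by (intros t Ht; rewrite L1 in Ht; pose proof (Bx t Ht); lra).
 assert (Hy0 : forall t, (t < length y)%nat -> 0 <= nth t y 0) by (intros t Ht; rewrite L2 in Ht; pose proof (By t Ht); lra).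
 rewrite !prod_list_rpow in * by (auto; apply ustar_nonneg; auto).
 assert (HU : rpow (prod_list (ustar n a b s)) beta <= rpow (prod_list x) beta).
 { apply rpow_le. lra. split. apply P_nonneg; auto. apply prod_ustar_le; auto. }
 assert (HY : rpow (prod_list (ustar n a b s)) beta <= rpow (prod_list y) alpha) by lra.
 assert (HYn : 0 <= prod_list y) by (rewrite prod_list_nth; apply prodR_nonneg; auto).
 apply Rle_ge.
 assert (Hpos : 0 <= 1 / (INR m * alpha)) by (unfold Rdiv; rewrite Rmult_1_l; left; apply Rinv_0_lt_compat; auto).
 pose proof (rpow_le _ _ (1 / (INR m * alpha)) Hpos (conj (rpow_nonneg _ _) HY)) as HY2. clear HY. rename HY2 into HY.
 rewrite !rpow_rpow in HY by (auto; apply P_nonneg; auto).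
 replace (alpha * (1 / (INR m * alpha))) with (1 / INR m) in HY by (field; lra).
 replace (beta * (1 / (INR m * alpha))) with g in HY by (field; lra). auto. Qed.

Lemma Sfun_comb2 N x x' l : length x = N -> length x' = N -> Sfun a (comb2 N l x x') = l * Sfun a x + (1 - l) * Sfun a x'.
Proof. intros H1 H2. rewrite !Sfun_nth. unfold comb2. rewrite vec_length, H1, H2. rewrite <- !sumR_scal, <- sumR_plus.
 apply sumR_ext. intros t Ht. rewrite vec_nth; auto. ring. Qed.

Lemma F_convex x x' l : length x = n -> length x' = n -> (forall t, (t < n)%nat -> a <= nth t x 0 <= b) ->
  (forall t, (t < n)%nat -> a <= nth t x' 0 <= b) -> 0 <= l <= 1 ->
  prod_list (map (fun t => rpow t g) (ustar n a b (Sfun a (comb2 n l x x')))) <=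
  l * prod_list (map (fun t => rpow t g) (ustar n a b (Sfun a x))) + (1 - l) * prod_list (map (fun t => rpow t g) (ustar n a b (Sfun a x'))).
Proof. intros L1 L2 B1 B2 Hl. rewrite Sfun_comb2 with (N := n) by auto.
 set (s := Sfun a x). set (s' := Sfun a x').
 assert (Hs : 0 <= s <= INR n * (b - a)) by (apply Sfun_bounds; auto).
 assert (Hs' : 0 <= s' <= INR n * (b - a)) by (apply Sfun_bounds; auto).
 set (s'' := l * s + (1 - l) * s').
 assert (Hs'' : 0 <= s'' <= INR n * (b - a)). { unfold s''. split.
   apply Rplus_le_le_0_compat; apply Rmult_le_pos; lra.
   assert (l * s <= l * (INR n * (b - a))) by (apply Rmult_le_compat_l; lra).
   assert ((1 - l) * s' <= (1 - l) * (INR n * (b - a))) by (apply Rmult_le_compat_l; lra). lra. }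
 rewrite !prod_list_rpow by (apply ustar_nonneg; auto).
 assert (HP : prod_list (ustar n a b s'') <= l * prod_list (ustar n a b s) + (1 - l) * prod_list (ustar n a b s')).
 { rewrite (prod_ustar n a b hn s'' Hs''). destruct (istar_spec n a b hn s'' Hs'') as [Hi _].
   set (i := istar n a b s'') in *.
   pose proof (Lf_le_ustar n a b hn ha hab s i Hs Hi). pose proof (Lf_le_ustar n a b hn ha hab s' i Hs' Hi).
   assert (E : Lf a b i (n - i - 1) s'' = l * Lf a b i (n - i - 1) s + (1 - l) * Lf a b i (n - i - 1) s') by (unfold Lf, s''; ring).
   rewrite E. assert (l * Lf a b i (n - i - 1) s <= l * prod_list (ustar n a b s)) by (apply Rmult_le_compat_l; lra).
   assert ((1 - l) * Lf a b i (n - i - 1) s' <= (1 - l) * prod_list (ustar n a b s')) by (apply Rmult_le_compat_l; lra). lra. }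
 eapply Rle_trans. apply rpow_le. pose proof g_ge1; lra. split. apply P_nonneg; auto. apply HP.
 apply rpow_convex. apply g_ge1. apply P_nonneg; auto. apply P_nonneg; auto. auto. Qed.

Lemma G_convex : convex_set n m Gset.
Proof. unfold convex_set, Gset, inH. intros [x y] [x' y'] l [[L1 [L2 [Bx By]]] HG] [[L1' [L2' [Bx' By']]] HG'] Hl. simpl in *.
 unfold pcomb; simpl. split. split; simpl. unfold comb2; apply vec_length. split. unfold comb2; apply vec_length.
 split.
 - intros t Ht. unfold comb2. rewrite vec_nth by auto. pose proof (Bx t Ht); pose proof (Bx' t Ht). split; nra.
 - intros t Ht. unfold comb2. rewrite vec_nth by auto. pose proof (By t Ht); pose proof (By' t Ht). split; nra.
 - simpl. pose proof (F_convex x x' l L1 L1' Bx Bx' Hl).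
   assert (GMe : forall z, length z = m -> prod_list (map (fun t => rpow t (1 / INR m)) z) = GM m (fun t => nth t z 0)).
   { intros z Hz. rewrite prod_list_map, Hz. reflexivity. }
   rewrite GMe by (unfold comb2; apply vec_length). rewrite GMe in HG, HG' by auto.
   rewrite (GM_ext m _ (fun t => l * nth t y 0 + (1 - l) * nth t y' 0)) by (intros; unfold comb2; rewrite vec_nth; auto).
   pose proof (GM_concave m (fun t => nth t y 0) (fun t => nth t y' 0) l hm) as GC.
   assert (l * GM m (fun t => nth t y 0) + (1 - l) * GM m (fun t => nth t y' 0) <= GM m (fun t => l * nth t y 0 + (1 - l) * nth t y' 0)).
   { apply GC; auto. intros t Ht; pose proof (By t Ht); lra. intros t Ht; pose proof (By' t Ht); lra. }
   assert (l * prod_list (map (fun t => rpow t g) (ustar n a b (Sfun a x))) <= l * GM m (fun t => nth t y 0)) by (apply Rmult_le_compat_l; lra).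
   assert ((1 - l) * prod_list (map (fun t => rpow t g) (ustar n a b (Sfun a x'))) <= (1 - l) * GM m (fun t => nth t y' 0)) by (apply Rmult_le_compat_l; lra).
   lra.
Qed.

Lemma part2_fwd p : conv n m S p -> Gset p.
Proof. apply conv_sub. intros q Hq; apply (inS_len _ _ _ _ _ _ _ _ _ Hq). apply S_G. apply G_convex. Qed.

Lemma part2_rev p : Gset p -> conv n m S p.
Proof. destruct p as [x y]. intros [[L1 [L2 [Bx By]]] HG]. simpl in *.
 set (s := Sfun a x). assert (Hs : 0 <= s <= INR n * (b - a)) by (apply Sfun_bounds; auto).
 set (u := ustar n a b s).
 pose proof mpos. assert (Hma : 0 < INR m * alpha) by (apply Rmult_lt_0_compat; auto).
 assert (Hy0 : forall t, (t < length y)%nat -> 0 <= nth t y 0) by (intros t Ht; rewrite L2 in Ht; pose proof (By t Ht); lra).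
 assert (Su : S (u, y)).
 { split. split; simpl. apply ustar_len. split; auto. split; auto. apply ustar_box; auto.
   simpl. fold s u in HG. rewrite !prod_list_rpow in * by (auto; apply ustar_nonneg; auto).
   apply Rge_le in HG. pose proof (rpow_le _ _ (INR m * alpha) ltac:(lra) (conj (rpow_nonneg _ _) HG)) as HG2. clear HG. rename HG2 into HG.
   rewrite !rpow_rpow in HG by (auto; try apply P_nonneg; auto; rewrite prod_list_nth; apply prodR_nonneg; auto).
   replace (1 / INR m * (INR m * alpha)) with alpha in HG by (field; lra).
   replace (g * (INR m * alpha)) with beta in HG by (field; lra). lra. }
 assert (Cu : conv n m S (u, y)) by (apply conv_incl; auto; apply ustar_len).
 apply (rado n (fun z => conv n m S (z, y))) with u; auto.
 - intros z f Hz F1 F2. apply conv_perm_x; auto.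
 - intros z z' l H1 H2 Hl. apply conv_comb_x; auto.
 - intros z [Hz _]; auto.
 - apply major_ustar; auto.
Qed.

End Part2.


Theorem mainTheorem17 (n m : nat) (a b c d alpha beta : R)
  (hn : (1 <= n)%nat) (hm : (1 <= m)%nat)
  (ha : 0 <= a) (hab : a < b) (hc : 0 <= c) (hcd : c < d)
  (halpha : 0 < alpha) (hbeta : 0 < beta) :
  (forall p : pt,
     conv n m (inS n m a b c d alpha beta) p <->
     (length (fst p) = n /\ length (snd p) = m /\
      exists u v : list R,
        majorizes v (snd p) /\ majorizes u (fst p) /\
        conv n m (inT n m a b c d alpha beta) (u, v))) /\
  (INR m * alpha <= beta ->
   forall p : pt,
     conv n m (inS n m a b c d alpha beta) p <->
     (inH n m a b c d p /\
      prod_list (map (fun t => rpow t (1 / INR m)) (snd p)) >=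
      prod_list (map (fun t => rpow t (beta / (INR m * alpha)))
                     (ustar n a b (Sfun a (fst p)))))).
Proof.
  split.
  - intros p. split.
    + intros H. eapply part1_fwd; eauto.
    + intros [L1 [L2 [u [v [Mv [Mu C]]]]]]. destruct p as [x y]. eapply part1_rev; eauto.
  - intros Hmab p. split.
    + intros H. eapply part2_fwd; eauto.
    + intros H. eapply part2_rev; eauto.
Qed.
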